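(* Let $W$ be a complex vector space, $\phi(x,z)$ an associate of the additive formal group, and $(a_i(x),b_i(x))$ ($i=1,\dots,n$) $\phi$-quasi compatible ordered pairs in $\mathcal{E}(W)$. Suppose that $$\sum_{i=1}^ng_i(x_1,x_2)a_i(x_1)b_i(x_2)\in\mathrm{Hom}(W,W((x_1,x_2)))$$ with $g_1,\dots,g_n\in\mathbb{C}((x_1,x_2))$. Then $$\sum_{i=1}^ng_i(\phi(x,z),x)Y^\phi_{\mathcal{E}}(a_i(x),z)b_i(x)=\Big(\sum_{i=1}^ng_i(x_1,x)a_i(x_1)b_i(x)\Big)\Big|_{x_1=\phi(x,z)}.$$
   Context: $\mathcal{E}(W)=\mathrm{Hom}(W,W((x)))$; $\mathbb{C}((x_1,x_2))=\mathbb{C}[[x_1,x_2]][x_1^{-1},x_2^{-1}]$. An associate is $\phi(x,z)\in\mathbb{C}((x))[[z]]$ with $\phi(x,0)=x$ and $\phi(\phi(x,x_2),x_0)=\phi(x,x_0+x_2)$. For $g\in\mathbb{C}((x_1,x_2))$, $g(\phi(x,z),x)\in\mathbb{C}((x))[[z]]$ is the substitution $x_1=\phi(x,z),x_2=x$ (negative powers of $\phi$ taken in $\mathbb{C}((x))[[z]]$); similarly for elements of $\mathrm{Hom}(W,W((x_1,x_2)))$. A pair $(a(x),b(x))$ is $\phi$-quasi compatible if $p(x_1,x_2)a(x_1)b(x_2)\in\mathrm{Hom}(W,W((x_1,x_2)))$ for some $p\in\mathbb{C}[[x,y]]$ with $p(\phi(x,z),x)\ne0$; then $Y^\phi_{\mathcal{E}}(a(x),z)b(x):=p(\phi(x,z),x)^{-1}(p(x_1,x)a(x_1)b(x))|_{x_1=\phi(x,z)}\in\mathcal{E}(W)((z))$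 (inverse in $\mathbb{C}((x))((z))$; independent of $p$). *)

(* Defs.v *)
(* Formal series are encoded as coefficient families indexed
   by integer exponents, together with support predicates; infinite-looking
   sums that are finite by the support conditions are computed by [fsum]. *)
From HB Require Import structures.
From mathcomp Require Import all_boot all_order all_algebra.
From Stdlib Require Import ClassicalEpsilon.
Set Implicit Arguments. Unset Strict Implicit. Unset Printing Implicit Defensive.
Import Order.TTheory GRing.Theory Num.Theory.
Local Open Scope ring_scope.

Definition fin_supp (V : zmodType) (f : int -> V) : Prop :=
  exists N : nat, forall k : int, (N < absz k)%N -> f k = 0.

(* sum over all k of f k, when f has finite support (0 otherwise; the value
   does not depend on the chosen bound N) *)
Definition fsum (V : zmodType) (f : int -> V) : V :=
  match excluded_middle_informative (fin_supp f) with
  | left H =>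
      let N := proj1_sig (constructive_indefinite_description _ H) in
      \sum_(i < (N.*2).+1) f (i%:Z - N%:Z)
  | right _ => 0
  end.

(* f : int -> V is the coefficient family of an element of V((x)) *)
Definition lbounded (V : zmodType) (f : int -> V) : Prop :=
  exists N : int, forall n, n < N -> f n = 0.

(* f : int -> int -> V is the coefficient family of an element of
   V[[x1,x2]][x1^-1,x2^-1]   (f m n = coefficient of x1^m x2^n) *)
Definition lbounded2 (V : zmodType) (f : int -> int -> V) : Prop :=
  exists N : int, forall m n, (m < N) || (n < N) -> f m n = 0.

Definition is_powser2 (K : fieldType) (p : int -> int -> K) : Prop :=
  forall m n, (m < 0) || (n < 0) -> p m n = 0.

(* a : int -> W -> W encodes a(x) = sum_n (a n) x^n ;
   a \in E(W) = Hom(W, W((x))) *)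
Definition in_EW (K : fieldType) (W : lmodType K) (a : int -> W -> W) : Prop :=
  (forall n (c : K) (u v : W), a n (c *: u + v) = c *: a n u + a n v) /\
  (forall w, lbounded (fun n => a n w)).

(* F (m n : int) : W -> W encodes F(x1,x2) = sum F m n x1^m x2^n;
   F \in Hom(W, W((x1,x2))) *)
Definition inHom2 (K : fieldType) (W : lmodType K) (F : int -> int -> W -> W)
  : Prop :=
  (forall m n (c : K) (u v : W), F m n (c *: u + v) = c *: F m n u + F m n v) /\
  (forall w, lbounded2 (fun m n => F m n w)).

Section Series.
Variables (K : fieldType) (W : lmodType K).

(* a(x1) b(x2) : coefficient of x1^m x2^n is a_m b_n *)
Definition prodab (a b : int -> W -> W) : int -> int -> W -> W :=
  fun m n w => a m (b n w).

(* g(x1,x2) F(x1,x2) for g in C((x1,x2)) and F in Hom(W, W((x1))((x2))) *)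
Definition mul12 (g : int -> int -> K) (F : int -> int -> W -> W)
  : int -> int -> W -> W :=
  fun m n w => fsum (fun l => fsum (fun k => g k l *: F (m - k) (n - l) w)).

(* ---- C((x))((z)): A j k = coefficient of z^j x^k ---- *)
Definition isKxz (A : int -> int -> K) : Prop :=
  (exists N : int, forall j k, j < N -> A j k = 0) /\
  forall j, lbounded (A j).

Definition oneKK : int -> int -> K := fun j k => ((j == 0) && (k == 0))%:R.

Definition mulKK (A B : int -> int -> K) : int -> int -> K :=
  fun j k => fsum (fun i => fsum (fun l => A i l * B (j - i) (k - l))).

(* multiplicative inverse in the field C((x))((z)) (0 if none) *)
Definition invKK (A : int -> int -> K) : int -> int -> K :=
  match excluded_middle_informative
          (exists B, isKxz B /\ forall j k, mulKK A B j k = oneKK j k) with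
  | left H => proj1_sig (constructive_indefinite_description _ H)
  | right _ => fun _ _ => 0
  end.

Definition powKK (A : int -> int -> K) (m : int) : int -> int -> K :=
  match m with
  | Posz n => iter n (mulKK A) oneKK
  | Negz n => iter n.+1 (mulKK (invKK A)) oneKK
  end.

(* C((x))((z)) times (W-operator valued) series: S j k w, coefficient
   of z^j x^k applied to w *)
Definition mulKW (A : int -> int -> K) (S : int -> int -> W -> W)
  : int -> int -> W -> W :=
  fun j k w => fsum (fun i => fsum (fun l => A i l *: S (j - i) (k - l) w)).

(* ---- associates: phi j k = coefficient of z^j x^k in phi(x,z) ---- *)
Definition associate (phi : int -> int -> K) : Prop :=
  [/\ (forall j k, j < 0 -> phi j k = 0),
      (forall j, lbounded (phi j)),
      (forall k, phi 0 k = (k == 1)%:R)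
    & (forall (a b : nat) (k : int),
        (* [x0^a x2^b x^k] phi(phi(x,x2),x0) = [x0^a x2^b x^k] phi(x,x0+x2) *)
        fsum (fun m => phi a m * powKK phi m b k)
        = 'C(a + b, a)%:R * phi (a + b)%N k)].

(* substitution x1 = phi(x,z), x2 = x into g in C((x1,x2)):
   result j k = coefficient of z^j x^k *)
Definition subst_s (phi : int -> int -> K) (g : int -> int -> K)
  : int -> int -> K :=
  fun j k => fsum (fun m => fsum (fun n => g m n * powKK phi m j (k - n))).

(* the same for F in Hom(W, W((x1,x2))) *)
Definition subst_W (phi : int -> int -> K) (F : int -> int -> W -> W)
  : int -> int -> W -> W :=
  fun j k w => fsum (fun m => fsum (fun n => powKK phi m j (k - n) *: F m n w)).

Definition qc_witness (phi : int -> int -> K) (a b : int -> W -> W)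
  (p : int -> int -> K) : Prop :=
  [/\ is_powser2 p, inHom2 (mul12 p (prodab a b))
    & subst_s phi p <> (fun _ _ => 0)].

Definition phi_quasi_compatible (phi : int -> int -> K) (a b : int -> W -> W)
  : Prop := exists p, qc_witness phi a b p.

(* Y^phi_E(a(x),z) b(x) computed with a given p *)
Definition Yp (phi : int -> int -> K) (a b : int -> W -> W)
  (p : int -> int -> K) : int -> int -> W -> W :=
  mulKW (invKK (subst_s phi p)) (subst_W phi (mul12 p (prodab a b))).

(* Y^phi_E(a(x),z) b(x): Y j k = coefficient of z^j x^k
   (computed with some witness p; the paper shows independence of p) *)
Definition Y_E (phi : int -> int -> K) (a b : int -> W -> W)
  : int -> int -> W -> W :=
  match excluded_middle_informative (phi_quasi_compatible phi a b) with
  | left H => Yp phi a b (proj1_sig (constructive_indefinite_description _ H))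
  | right _ => fun _ _ _ => 0
  end.

End Series.

(* Main.v *)
Require Import Defs.
From HB Require Import structures.
From mathcomp Require Import all_boot all_order all_algebra.
From mathcomp Require Import zify.
From mathcomp Require Import boolp.
From Stdlib Require Import ClassicalEpsilon FunctionalExtensionality ProofIrrelevance.
Set Implicit Arguments. Unset Strict Implicit. Unset Printing Implicit Defensive.
Import Order.TTheory GRing.Theory Num.Theory.
Local Open Scope ring_scope.

Definition zr (M : nat) : seq int := [seq (i%:Z - M%:Z) | i <- iota 0 (M.*2).+1].

Lemma mem_zr M x : (x \in zr M) = (absz x <= M)%N.
Proof.
apply/mapP/idP.
  by case=> i; rewrite mem_iota => /andP[_ Hi] ->; lia.
move=> H; exists (absz (x + M%:Z)); first by rewrite mem_iota; lia.
lia.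
Qed.

Lemma uniq_zr M : uniq (zr M).
Proof.
rewrite map_inj_uniq ?iota_uniq // => i j /= H; lia.
Qed.

Section FS.
Variable V : zmodType.
Implicit Types f g : int -> V.

Lemma sum_supp_eq f s1 s2 : uniq s1 -> uniq s2 ->
  (forall i, f i != 0 -> i \in s1) -> (forall i, f i != 0 -> i \in s2) ->
  \sum_(i <- s1) f i = \sum_(i <- s2) f i.
Proof.
move=> u1 u2 h1 h2.
have E s : \sum_(i <- s) f i = \sum_(i <- filter (fun i => f i != 0) s) f i.
  rewrite big_filter [RHS]big_mkcond /=; apply: eq_bigr => i _.
  by case: (f i =P 0) => [->|].
rewrite (E s1) (E s2); apply: perm_big; apply: uniq_perm; rewrite ?filter_uniq //.
move=> i; rewrite !mem_filter; apply/andP/andP => -[H1 H2]; split => //; auto.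
Qed.

Lemma fsum_def f N : (forall k, (N < absz k)%N -> f k = 0) ->
  fsum f = \sum_(i <- zr N) f i.
Proof.
move=> HN; rewrite /fsum; case: excluded_middle_informative => [H|[]]; last by exists N.
case: (constructive_indefinite_description _ H) => /= N' HN'.
have -> : \sum_(i < (N'.*2).+1) f (i%:Z - N'%:Z) = \sum_(i <- zr N') f i.
  by rewrite /zr big_map -(big_mkord xpredT (fun i : nat => f (i%:Z - N'%:Z))) /index_iota subn0.
apply: sum_supp_eq; rewrite ?uniq_zr // => i /eqP Hi; rewrite mem_zr.
  by case: (leqP (absz i) N') => // /HN'.
by case: (leqP (absz i) N) => // /HN.
Qed.

Lemma fsumE f (s : seq int) : uniq s -> (forall i, f i != 0 -> i \in s) ->
  fsum f = \sum_(i <- s) f i.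
Proof.
move=> us Hs.
pose N := \max_(i <- s) absz i.
have HN : forall k, (N < absz k)%N -> f k = 0.
  move=> k Hk; apply/eqP; apply: contraTT Hk => /Hs ks.
  by rewrite -leqNgt /N (big_rem k ks) /= leq_maxl.
rewrite (fsum_def HN); apply: sum_supp_eq; rewrite ?uniq_zr // => i Hi.
rewrite mem_zr. case: (leqP (absz i) N) => // /HN /eqP; by rewrite (negbTE Hi).
Qed.

Lemma fsum_out f : ~ fin_supp f -> fsum f = 0.
Proof. by rewrite /fsum; case: excluded_middle_informative. Qed.

Lemma fin_supp_seq f (s : seq int) : (forall i, f i != 0 -> i \in s) -> fin_supp f.
Proof.
move=> Hs; exists (\max_(i <- s) absz i) => k Hk; apply/eqP; apply: contraTT Hk => /Hs ks.
by rewrite -leqNgt (big_rem k ks) /= leq_maxl.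
Qed.

Lemma fin_supp_int f (a b : int) : (forall i, f i != 0 -> a <= i <= b) -> fin_supp f.
Proof.
move=> H; exists (maxn (absz a) (absz b)) => k Hk; apply/eqP; apply: contraTT Hk => /H.
move=> /andP[h1 h2]; rewrite -leqNgt; lia.
Qed.

Lemma fsum_supp f : fin_supp f -> exists N, forall k, (N < absz k)%N -> f k = 0.
Proof. by []. Qed.

Lemma fsum_ext f g : f =1 g -> fsum f = fsum g.
Proof. by move=> /functional_extensionality ->. Qed.

Lemma fsum0 : fsum (fun _ : int => (0 : V)) = 0.
Proof. by rewrite (@fsum_def _ 0) // big1. Qed.

Lemma fsum_bij f (h h' : int -> int) (C : nat) : cancel h h' -> cancel h' h ->
  (forall i, (absz (h i) <= absz i + C)%N) -> (forall i, (absz (h' i) <= absz i + C)%N) ->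
  fsum (fun i => f (h i)) = fsum f.
Proof.
move=> hK h'K Hh Hh'.
have [[N HN]|nf] := (classic (fin_supp f)).
  have HN' : forall k, (N + C < absz k)%N -> f (h k) = 0.
    move=> k Hk; apply: HN; have := Hh' (h k); rewrite hK; lia.
  rewrite (fsum_def HN') (fsum_def HN) -(big_map h xpredT f).
  have hinj : injective h := can_inj hK.
  apply: sum_supp_eq; rewrite ?(map_inj_uniq hinj) ?uniq_zr //.
  - move=> i Hi; apply/mapP; exists (h' i); last by rewrite h'K.
    rewrite mem_zr; have := Hh' i; case: (leqP (absz i) N); first lia.
    by move=> /HN /eqP; rewrite (negbTE Hi).
  - by move=> i Hi; rewrite mem_zr; case: (leqP (absz i) N) => // /HN /eqP; rewrite (negbTE Hi).
rewrite (fsum_out nf) fsum_out //.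
move=> [N HN]; apply: nf; exists (N + C)%N => k Hk.
rewrite -(h'K k); apply: HN; have := Hh (h' k); rewrite h'K; lia.
Qed.

Lemma fsum_shift f c : fsum (fun i => f (i + c)) = fsum f.
Proof.
apply: (@fsum_bij f (fun i => i + c) (fun i => i - c) (absz c)).
- by move=> i; rewrite addrK.
- by move=> i; rewrite subrK.
- move=> i; lia.
- move=> i; lia.
Qed.

Lemma fsum_refl f c : fsum (fun i => f (c - i)) = fsum f.
Proof.
apply: (@fsum_bij f (fun i => c - i) (fun i => c - i) (absz c)).
- by move=> i; rewrite opprB addrC subrK.
- by move=> i; rewrite opprB addrC subrK.
- move=> i; lia.
- move=> i; lia.
Qed.

Lemma fin_suppD f g : fin_supp f -> fin_supp g -> fin_supp (fun i => f i + g i).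
Proof.
move=> [N1 H1] [N2 H2]; exists (maxn N1 N2) => k Hk.
rewrite H1 ?H2 ?addr0 //; lia.
Qed.

Lemma fsumD f g : fin_supp f -> fin_supp g -> fsum (fun i => f i + g i) = fsum f + fsum g.
Proof.
move=> [N1 H1] [N2 H2].
have H1' : forall k, (maxn N1 N2 < absz k)%N -> f k = 0 by move=> k Hk; apply: H1; lia.
have H2' : forall k, (maxn N1 N2 < absz k)%N -> g k = 0 by move=> k Hk; apply: H2; lia.
have H3 : forall k, (maxn N1 N2 < absz k)%N -> f k + g k = 0.
  by move=> k Hk; rewrite H1' ?H2' ?addr0.
by rewrite (fsum_def H1') (fsum_def H2') (fsum_def H3) big_split.
Qed.

Lemma fin_supp_sum (I : Type) (r : seq I) (F : I -> int -> V) :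
  (forall i, fin_supp (F i)) -> fin_supp (fun k => \sum_(i <- r) F i k).
Proof.
move=> H; elim: r => [|x r IH].
  by exists 0%N => k _; rewrite big_nil.
suff -> : (fun k => \sum_(i <- x :: r) F i k) = (fun k => F x k + \sum_(i <- r) F i k).
  exact: fin_suppD.
by apply: functional_extensionality => k; rewrite big_cons.
Qed.

Lemma fsum_sum (I : Type) (r : seq I) (F : I -> int -> V) :
  (forall i, fin_supp (F i)) ->
  fsum (fun k => \sum_(i <- r) F i k) = \sum_(i <- r) fsum (F i).
Proof.
move=> H; elim: r => [|x r IH].
  rewrite big_nil; transitivity (fsum (fun _ : int => 0 : V)); last exact: fsum0.
  by apply: fsum_ext => k; rewrite big_nil.
rewrite big_cons -IH -fsumD //; last exact: fin_supp_sum.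
by apply: fsum_ext => k; rewrite big_cons.
Qed.

Lemma fsum_delta f c : (forall i, i != c -> f i = 0) -> fsum f = f c.
Proof.
move=> H; rewrite (@fsumE f [:: c]) ?big_seq1 // => i; rewrite inE.
by apply: contraR => /H ->.
Qed.

End FS.

Lemma fsum_morph (V V' : zmodType) (h : V -> V') (f : int -> V) :
  h 0 = 0 -> (forall x y, h (x + y) = h x + h y) -> fin_supp f ->
  fsum (fun i => h (f i)) = h (fsum f).
Proof.
move=> h0 hD [N HN].
have HN' : forall k, (N < absz k)%N -> h (f k) = 0 by move=> k /HN ->.
rewrite (fsum_def HN') (fsum_def HN).
by rewrite (big_morph h hD h0).
Qed.

Lemma fin_supp_morph (V V' : zmodType) (h : V -> V') (f : int -> V) :
  h 0 = 0 -> fin_supp f -> fin_supp (fun i => h (f i)).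
Proof. by move=> h0 [N HN]; exists N => k /HN ->. Qed.

Lemma fsum_box (V : zmodType) (F : int -> int -> V) N :
  (forall i l, (N < absz i)%N || (N < absz l)%N -> F i l = 0) ->
  fsum (fun i => fsum (fun l => F i l)) = \sum_(i <- zr N) \sum_(l <- zr N) F i l.
Proof.
move=> H.
have E : forall i, fsum (fun l => F i l) = \sum_(l <- zr N) F i l.
  by move=> i; apply: fsum_def => k Hk; apply: H; rewrite Hk orbT.
rewrite (fsum_ext E); apply: fsum_def => k Hk; apply: big1 => l _; apply: H.
by rewrite Hk.
Qed.

Lemma fsum_exchange (V : zmodType) (F : int -> int -> V) N :
  (forall i l, (N < absz i)%N || (N < absz l)%N -> F i l = 0) ->
  fsum (fun i => fsum (fun l => F i l)) = fsum (fun l => fsum (fun i => F i l)).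
Proof.
move=> H; rewrite (fsum_box H) (@fsum_box _ (fun l i => F i l) N).
  exact: exchange_big.
by move=> i l Hil; apply: H; rewrite orbC.
Qed.


Lemma fsum_eq0 (V : zmodType) (f : int -> V) : (forall i, f i = 0) -> fsum f = 0.
Proof. by move=> H; rewrite (fsum_ext H) fsum0. Qed.

Definition LL (V : zmodType) (F : int -> int -> V) :=
  (exists N, forall j k, j < N -> F j k = 0) /\
  (forall j, exists L, forall k, k < L -> F j k = 0).

Lemma unif_bound (V : zmodType) (F : int -> int -> V) :
  (forall j, exists L, forall k, k < L -> F j k = 0) ->
  forall a b, exists m, forall j k, a <= j <= b -> k < m -> F j k = 0.
Proof.
move=> H a b.
suff S : forall t : nat, exists m, forall j k, a <= j <= a + t%:Z -> k < m -> F j k = 0.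
  have [m Hm] := S (absz (b - a)); exists m => j k Hj; apply: Hm; lia.
elim=> [|t [m Hm]].
  have [L HL] := H a; exists L => j k Hj; have -> : j = a by lia.
  exact: HL.
have [L HL] := H (a + t.+1%:Z).
case: (lerP m L) => hmL.
  exists m => j k Hj hk; case: (lerP j (a + t%:Z)) => hj.
    apply: Hm => //; lia.
  have -> : j = a + t.+1%:Z by lia.
  apply: HL; lia.
exists L => j k Hj hk; case: (lerP j (a + t%:Z)) => hj.
  apply: Hm => //; lia.
have -> : j = a + t.+1%:Z by lia.
apply: HL; lia.
Qed.

Lemma nz_low (V : zmodType) (F : int -> int -> V) N j k :
  (forall j k, j < N -> F j k = 0) -> F j k != 0 -> N <= j.
Proof. by move=> H; apply: contraR; rewrite -ltNge => /H ->; rewrite eqxx. Qed.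

Lemma nz_unif (V : zmodType) (F : int -> int -> V) a b m j k :
  (forall j k, a <= j <= b -> k < m -> F j k = 0) -> a <= j <= b -> F j k != 0 -> m <= k.
Proof. by move=> H hj; apply: contraR; rewrite -ltNge => /(H _ _ hj) ->; rewrite eqxx. Qed.

Lemma nz_scale (K : fieldType) (V : lmodType K) (c : K) (v : V) :
  c *: v != 0 -> c != 0 /\ v != 0.
Proof.
move=> H; split; apply: contraNneq H => ->; by rewrite ?scale0r ?scaler0.
Qed.

Lemma nz_mul (K : fieldType) (c d : K) : c * d != 0 -> c != 0 /\ d != 0.
Proof. by move=> H; split; apply: contraNneq H => ->; rewrite ?mul0r ?mulr0. Qed.

Definition box2 (V : zmodType) (F : int -> int -> V) (M : nat) :=
  forall i l, (M < absz i)%N || (M < absz l)%N -> F i l = 0.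

Lemma box2_in (V : zmodType) (F : int -> int -> V) M i : box2 F M -> fin_supp (F i).
Proof. by move=> H; exists M => l Hl; apply: H; rewrite Hl orbT. Qed.

Lemma box2_out (V : zmodType) (F : int -> int -> V) M : box2 F M ->
  fin_supp (fun i => fsum (F i)).
Proof.
move=> H; exists M => i Hi; apply: fsum_eq0 => l; apply: H.
by rewrite Hi.
Qed.

Lemma fsum2_morph (V V' : zmodType) (h : V -> V') (F : int -> int -> V) M :
  h 0 = 0 -> (forall x y, h (x + y) = h x + h y) -> box2 F M ->
  h (fsum (fun i => fsum (F i))) = fsum (fun i => fsum (fun l => h (F i l))).
Proof.
move=> h0 hD HB; rewrite -fsum_morph //; last exact: box2_out HB.
apply: fsum_ext => i; rewrite (fsum_morph (h:=h) (f:=F i)) //; exact: box2_in HB.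
Qed.

Lemma box_int (V : zmodType) (F : int -> int -> V) (a1 b1 a2 b2 : int) :
  (forall i l, F i l != 0 -> (a1 <= i <= b1) && (a2 <= l <= b2)) ->
  box2 F (absz a1 + absz b1 + absz a2 + absz b2).
Proof.
move=> H i l Hil; apply/eqP; apply: contraTT Hil => /H /andP[/andP[h1 h2] /andP[h3 h4]].
apply/norP; split; rewrite -leqNgt; lia.
Qed.

Definition box4 (V : zmodType) (T : int -> int -> int -> int -> V) (M : nat) :=
  forall a b i l, [|| (M < absz a)%N, (M < absz b)%N, (M < absz i)%N | (M < absz l)%N] ->
  T a b i l = 0.

Lemma fsum4_def (V : zmodType) (T : int -> int -> int -> int -> V) M : box4 T M ->
  fsum (fun a => fsum (fun b => fsum (fun i => fsum (fun l => T a b i l)))) =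
  \sum_(a <- zr M) \sum_(b <- zr M) \sum_(i <- zr M) \sum_(l <- zr M) T a b i l.
Proof.
move=> H.
have E1 : forall a b i, fsum (fun l => T a b i l) = \sum_(l <- zr M) T a b i l.
  by move=> a b i; apply: fsum_def => l Hl; apply: H; rewrite Hl !orbT.
have E2 : forall a b, fsum (fun i => fsum (fun l => T a b i l)) =
    \sum_(i <- zr M) \sum_(l <- zr M) T a b i l.
  move=> a b; rewrite (fsum_ext (E1 a b)); apply: fsum_def => i Hi.
  by apply: big1 => l _; apply: H; rewrite Hi !orbT.
have E3 : forall a, fsum (fun b => fsum (fun i => fsum (fun l => T a b i l))) =
    \sum_(b <- zr M) \sum_(i <- zr M) \sum_(l <- zr M) T a b i l.
  move=> a; rewrite (fsum_ext (E2 a)); apply: fsum_def => b Hb.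
  by apply: big1 => i _; apply: big1 => l _; apply: H; rewrite Hb !orbT.
rewrite (fsum_ext E3); apply: fsum_def => a Ha.
by apply: big1 => b _; apply: big1 => i _; apply: big1 => l _; apply: H; rewrite Ha.
Qed.

Lemma fsum4_exchange (V : zmodType) (T : int -> int -> int -> int -> V) M : box4 T M ->
  fsum (fun a => fsum (fun b => fsum (fun i => fsum (fun l => T a b i l)))) =
  fsum (fun i => fsum (fun l => fsum (fun a => fsum (fun b => T a b i l)))).
Proof.
move=> H; rewrite (fsum4_def H) (@fsum4_def _ (fun i l a b => T a b i l) M); last first.
  move=> i l a b; case/or4P => Hx; apply: H; by rewrite Hx ?orbT.
under eq_bigr do rewrite exchange_big /=.
rewrite [LHS]exchange_big /=; apply: eq_bigr => i _.
under eq_bigr do rewrite exchange_big /=.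
by rewrite [LHS]exchange_big /=.
Qed.

Section Conv.
Variable K : fieldType.

Definition cv (V : lmodType K) (A : int -> int -> K) (F : int -> int -> V) : int -> int -> V :=
  fun j k => fsum (fun i => fsum (fun l => A i l *: F (j - i) (k - l))).

Lemma mulKK_cv (A B : int -> int -> K) : mulKK A B = @cv K^o A B.
Proof. by []. Qed.

Lemma mulKW_cv (V : lmodType K) (A : int -> int -> K) (S : int -> int -> V -> V) j k w :
  mulKW A S j k w = cv A (fun a b => S a b w) j k.
Proof. by []. Qed.

Variable V : lmodType K.

Lemma cv_box (A : int -> int -> K) (F : int -> int -> V) j k : LL A -> LL F ->
  exists M, box2 (fun i l => A i l *: F (j - i) (k - l)) M.
Proof.
move=> [[NA HA] HA'] [[NF HF] HF'].
have [mA HmA] := unif_bound HA' NA (j - NF).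
have [mF HmF] := unif_bound HF' NF (j - NA).
exists (absz NA + absz (j - NF) + absz mA + absz (k - mF))%N.
apply: (@box_int _ _ NA (j - NF) mA (k - mF)) => i l /nz_scale [h1 h2].
have hi := nz_low HA h1; have hi' := nz_low HF h2.
have u1 : mA <= l by apply: (nz_unif HmA _ h1); lia.
have u2 : mF <= k - l by apply: (nz_unif HmF _ h2); lia.
apply/andP; split; apply/andP; split; lia.
Qed.

Lemma LL0 : LL (fun _ _ => (0 : V)).
Proof. by split; [exists 0 | move=> j; exists 0]. Qed.

Lemma LLD (F G : int -> int -> V) : LL F -> LL G -> LL (fun j k => F j k + G j k).
Proof.
move=> [[N1 H1] H1'] [[N2 H2] H2']; split.
  by exists (- (absz N1 + absz N2)%:Z) => j k hj; rewrite H1 ?H2 ?addr0 //; lia.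
move=> j; have [L1 HL1] := H1' j; have [L2 HL2] := H2' j.
by exists (- (absz L1 + absz L2)%:Z) => k hk; rewrite HL1 ?HL2 ?addr0 //; lia.
Qed.

Lemma LL_sum (I : Type) (r : seq I) (F : I -> int -> int -> V) :
  (forall i, LL (F i)) -> LL (fun j k => \sum_(i <- r) F i j k).
Proof.
move=> H; elim: r => [|x r IH].
  suff -> : (fun j k => \sum_(i <- [::]) F i j k) = (fun _ _ => 0) by exact: LL0.
  by do 2 (apply: functional_extensionality => ?); rewrite big_nil.
suff -> : (fun j k => \sum_(i <- x :: r) F i j k) = (fun j k => F x j k + \sum_(i <- r) F i j k).
  exact: LLD.
by do 2 (apply: functional_extensionality => ?); rewrite big_cons.
Qed.

Lemma cv_LL (A : int -> int -> K) (F : int -> int -> V) : LL A -> LL F -> LL (cv A F).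
Proof.
move=> LA LF; have [[NA HA] HA'] := LA; have [[NF HF] HF'] := LF; split.
  exists (NA + NF) => j k hj; rewrite /cv; apply: fsum_eq0 => i.
  apply: fsum_eq0 => l.
  case: (ltrP i NA) => hi; first by rewrite HA ?scale0r.
  by rewrite HF ?scaler0 //; lia.
move=> j.
have [mA HmA] := unif_bound HA' NA (j - NF).
have [mF HmF] := unif_bound HF' NF (j - NA).
exists (mA + mF) => k hk; rewrite /cv; apply: fsum_eq0 => i.
apply: fsum_eq0 => l.
apply/eqP; apply: contraTT hk => /nz_scale [h1 h2].
have hi := nz_low HA h1; have hi' := nz_low HF h2.
have u1 : mA <= l by apply: (nz_unif HmA _ h1); lia.
have u2 : mF <= k - l by apply: (nz_unif HmF _ h2); lia.
rewrite -leNgt; lia.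
Qed.

Lemma cvD (A : int -> int -> K) (F G : int -> int -> V) j k : LL A -> LL F -> LL G ->
  cv A (fun a b => F a b + G a b) j k = cv A F j k + cv A G j k.
Proof.
move=> LA LF LG; rewrite /cv.
have [M1 H1] := cv_box j k LA LF; have [M2 H2] := cv_box j k LA LG.
rewrite -fsumD; [|exact: box2_out H1|exact: box2_out H2].
apply: fsum_ext => i; rewrite -fsumD; [|exact: box2_in H1|exact: box2_in H2].
by apply: fsum_ext => l; rewrite scalerDr.
Qed.

Lemma cvDl (A B : int -> int -> K) (F : int -> int -> V) j k : LL A -> LL B -> LL F ->
  cv (fun a b => A a b + B a b) F j k = cv A F j k + cv B F j k.
Proof.
move=> LA LB LF; rewrite /cv.
have [M1 H1] := cv_box j k LA LF; have [M2 H2] := cv_box j k LB LF.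
rewrite -fsumD; [|exact: box2_out H1|exact: box2_out H2].
apply: fsum_ext => i; rewrite -fsumD; [|exact: box2_in H1|exact: box2_in H2].
by apply: fsum_ext => l; rewrite scalerDl.
Qed.

Lemma cv0 (A : int -> int -> K) j k : cv A (fun _ _ => (0 : V)) j k = 0.
Proof.
rewrite /cv; apply: fsum_eq0 => i; apply: fsum_eq0 => l.
by rewrite scaler0.
Qed.

Lemma cv_sum (I : Type) (r : seq I) (A : int -> int -> K) (F : I -> int -> int -> V) j k :
  LL A -> (forall i, LL (F i)) ->
  cv A (fun a b => \sum_(i <- r) F i a b) j k = \sum_(i <- r) cv A (F i) j k.
Proof.
move=> LA LF; elim: r j k => [|x r IH] j k.
  rewrite big_nil -[RHS](cv0 A j k) /cv; apply: fsum_ext => i.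
  apply: fsum_ext => l; by rewrite big_nil.
rewrite big_cons -IH -cvD //; last exact: LL_sum.
congr fsum; apply: functional_extensionality => i.
congr fsum; apply: functional_extensionality => l; by rewrite big_cons.
Qed.

Lemma cv1 (F : int -> int -> V) : cv (oneKK K) F = F.
Proof.
apply: functional_extensionality => j; apply: functional_extensionality => k; rewrite /cv.
rewrite (@fsum_delta _ _ 0).
  rewrite (@fsum_delta _ _ 0); first by rewrite /oneKK /= scale1r !subr0.
  by move=> l hl; rewrite /oneKK /= (negbTE hl) scale0r.
move=> i hi; apply: fsum_eq0 => l.
by rewrite /oneKK (negbTE hi) scale0r.
Qed.

End Conv.


Lemma box4_int (V : zmodType) (T : int -> int -> int -> int -> V)
    (a1 b1 a2 b2 a3 b3 a4 b4 : int) :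
  (forall a b i l, T a b i l != 0 ->
     [/\ a1 <= a <= b1, a2 <= b <= b2, a3 <= i <= b3 & a4 <= l <= b4]) ->
  box4 T (absz a1 + absz b1 + absz a2 + absz b2 + absz a3 + absz b3 + absz a4 + absz b4).
Proof.
move=> H a b i l Hx; apply/eqP; apply: contraTT Hx => /H.
case=> /andP[h1 h2] /andP[h3 h4] /andP[h5 h6] /andP[h7 h8].
rewrite !negb_or -!leqNgt; apply/and4P; split; lia.
Qed.

Lemma fsum4_exchange_int (V : zmodType) (T : int -> int -> int -> int -> V)
    (a1 b1 a2 b2 a3 b3 a4 b4 : int) :
  (forall a b i l, T a b i l != 0 ->
     [/\ a1 <= a <= b1, a2 <= b <= b2, a3 <= i <= b3 & a4 <= l <= b4]) ->
  fsum (fun a => fsum (fun b => fsum (fun i => fsum (fun l => T a b i l)))) =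
  fsum (fun i => fsum (fun l => fsum (fun a => fsum (fun b => T a b i l)))).
Proof. by move=> H; apply: fsum4_exchange (box4_int H). Qed.

Lemma subKK (x y : int) : x - (x - y) = y.
Proof. lia. Qed.

Section Assoc.
Variable K : fieldType.

Lemma mulKK_comm (A B : int -> int -> K) : mulKK A B = mulKK B A.
Proof.
apply: functional_extensionality => j; apply: functional_extensionality => k.
rewrite /mulKK -[LHS](fsum_refl _ j); apply: fsum_ext => i.
rewrite -[LHS](fsum_refl _ k); apply: fsum_ext => l.
by rewrite !subKK mulrC.
Qed.

Variable V : lmodType K.

Lemma cv_assoc (A B : int -> int -> K) (F : int -> int -> V) : LL A -> LL B -> LL F ->
  cv A (cv B F) = cv (mulKK A B) F.
Proof.
move=> LA LB LF.
apply: functional_extensionality => j; apply: functional_extensionality => k.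
have E1 : cv A (cv B F) j k = fsum (fun i => fsum (fun l => fsum (fun a => fsum (fun b =>
    A i l *: (B a b *: F (j - i - a) (k - l - b)))))).
  rewrite /cv; apply: fsum_ext => i; apply: fsum_ext => l.
  have [M HM] := cv_box (j - i) (k - l) LB LF.
  by rewrite (fsum2_morph (h := fun v => A i l *: v) _ _ HM) ?scaler0 // => x y; rewrite scalerDr.
have E2 : cv (mulKK A B) F j k = fsum (fun a => fsum (fun b => fsum (fun i => fsum (fun l =>
    (A i l * B (a - i) (b - l)) *: F (j - a) (k - b))))).
  rewrite /cv; apply: fsum_ext => a; apply: fsum_ext => b.
  have [M HM] := @cv_box _ K^o A B a b LA LB.
  rewrite mulKK_cv (fsum2_morph (h := fun c : K^o => (c : K) *: F (j - a) (k - b)) _ _ HM) //.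
    by rewrite scale0r.
  by move=> x y; rewrite scalerDl.
rewrite E1 E2.
have [[NA HA] HA'] := LA; have [[NB HB] HB'] := LB; have [[NF HF] HF'] := LF.
have [mA HmA] := unif_bound HA' NA (j - NF - NB).
have [mB HmB] := unif_bound HB' NB (j - NF - NA).
have [mF HmF] := unif_bound HF' NF (j - NA - NB).
rewrite [RHS](fsum4_exchange_int (a1 := NA + NB) (b1 := j - NF) (a2 := mA + mB) (b2 := k - mF)
   (a3 := NA) (b3 := j - NF - NB) (a4 := mA) (b4 := k - mF - mB)); last first.
  move=> a b i l /nz_scale [H12 h3]; have [h1 h2] := nz_mul H12.
  have q1 := nz_low HA h1; have q2 := nz_low HB h2; have q3 := nz_low HF h3.
  have u1 : mA <= l by apply: (nz_unif HmA _ h1); lia.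
  have u2 : mB <= b - l by apply: (nz_unif HmB _ h2); lia.
  have u3 : mF <= k - b by apply: (nz_unif HmF _ h3); lia.
  split; apply/andP; split; lia.
apply: fsum_ext => i; apply: fsum_ext => l.
rewrite -[RHS](fsum_shift _ i); apply: fsum_ext => a.
rewrite -[RHS](fsum_shift _ l); apply: fsum_ext => b.
rewrite /= scalerA !addrK; congr (_ *: F _ _); lia.
Qed.

End Assoc.


Section OneD.
Variable F : fieldType.
Implicit Types u v w : int -> F.

Definition c1 u v : int -> F := fun k => fsum (fun l => u l * v (k - l)).
Definition d1 : int -> F := fun k => (k == 0)%:R.

Lemma lb_nz u N k : (forall n, n < N -> u n = 0) -> u k != 0 -> N <= k.
Proof. by move=> H; apply: contraR; rewrite -ltNge => /H ->; rewrite eqxx. Qed.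

Lemma c1_supp u v Nu Nv k : (forall n, n < Nu -> u n = 0) -> (forall n, n < Nv -> v n = 0) ->
  fin_supp (fun l => u l * v (k - l)).
Proof.
move=> Hu Hv; apply: (@fin_supp_int _ _ Nu (k - Nv)) => l /nz_mul [h1 h2].
have := lb_nz Hu h1; have := lb_nz Hv h2; lia.
Qed.

Lemma c1_lb u v Nu Nv : (forall n, n < Nu -> u n = 0) -> (forall n, n < Nv -> v n = 0) ->
  forall k, k < Nu + Nv -> c1 u v k = 0.
Proof.
move=> Hu Hv k hk; apply: fsum_eq0 => l.
case: (ltrP l Nu) => hl; first by rewrite Hu ?mul0r.
by rewrite Hv ?mulr0 //; lia.
Qed.

Lemma c1C u v : c1 u v = c1 v u.
Proof.
apply: functional_extensionality => k; rewrite /c1 -[LHS](fsum_refl _ k).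
by apply: fsum_ext => l; rewrite subKK mulrC.
Qed.

Lemma c1A u v w : lbounded u -> lbounded v -> lbounded w ->
  c1 u (c1 v w) = c1 (c1 u v) w.
Proof.
move=> [Nu Hu] [Nv Hv] [Nw Hw]; apply: functional_extensionality => k.
have E1 : c1 u (c1 v w) k = fsum (fun l => fsum (fun m => u l * (v m * w (k - l - m)))).
  rewrite /c1; apply: fsum_ext => l.
  rewrite -(fsum_morph (h := fun x => u l * x)) ?mulr0 //; last exact: c1_supp Hv Hw.
  by move=> x y; rewrite mulrDr.
have E2 : c1 (c1 u v) w k = fsum (fun a => fsum (fun l => u l * v (a - l) * w (k - a))).
  rewrite /c1; apply: fsum_ext => a.
  rewrite -(fsum_morph (h := fun x => x * w (k - a))) ?mul0r //; last exact: c1_supp Hu Hv.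
  by move=> x y; rewrite mulrDl.
rewrite E1 E2 [RHS](@fsum_exchange _ _ (absz Nu + absz (k - Nw - Nv)%R + absz (Nu + Nv)%R + absz (k - Nw)%R)%N).
  apply: fsum_ext => l; rewrite -[RHS](fsum_shift _ l); apply: fsum_ext => m.
  by rewrite /= addrK mulrA; congr (_ * w _); lia.
move=> a l Hx; apply/eqP; apply: contraTT Hx => /nz_mul [/nz_mul [h1 h2] h3].
have := lb_nz Hu h1; have := lb_nz Hv h2; have := lb_nz Hw h3.
move=> *; apply/norP; split; rewrite -leqNgt; lia.
Qed.

Lemma c1d v : c1 d1 v = v.
Proof.
apply: functional_extensionality => k; rewrite /c1 (@fsum_delta _ _ 0).
  by rewrite /d1 eqxx mul1r subr0.
by move=> l hl; rewrite /d1 (negbTE hl) mul0r.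
Qed.

Lemma c1Dl u v w : lbounded u -> lbounded v -> lbounded w ->
  c1 (fun k => u k + v k) w = fun k => c1 u w k + c1 v w k.
Proof.
move=> [Nu Hu] [Nv Hv] [Nw Hw]; apply: functional_extensionality => k.
rewrite /c1 -fsumD; [|exact: c1_supp Hu Hw|exact: c1_supp Hv Hw].
by apply: fsum_ext => l; rewrite mulrDl.
Qed.

Section Inv.
Variables (u : int -> F) (k0 : int).
Hypothesis Hu : forall k, k < k0 -> u k = 0.
Hypothesis Hc : u k0 != 0.
Let ci := (u k0)^-1.

Fixpoint ws (t : nat) : seq F :=
  match t with
  | 0 => [:: ci]
  | t'.+1 => let p := ws t' in
      rcons p (- ci * \sum_(s < t'.+1) u (k0 + (s.+1)%:Z) * nth 0 p (t' - s))
  end.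

Lemma size_ws t : size (ws t) = t.+1.
Proof. by elim: t => //= t IH; rewrite size_rcons IH. Qed.

Lemma ws_prefix t t' i : (i <= t)%N -> (t <= t')%N -> nth 0 (ws t') i = nth 0 (ws t) i.
Proof.
move=> hi; elim: t' => [|t' IH] ht.
  by have -> : t = 0%N by lia.
case: (eqVneq t t'.+1) => [->|hne] //.
have hi' : (i < t'.+1)%N by lia.
rewrite /= nth_rcons size_ws hi' IH //; lia.
Qed.

Definition wc (t : nat) : F := nth 0 (ws t) t.

Lemma wc0 : wc 0 = ci. Proof. by []. Qed.

Lemma wcS t : wc t.+1 = - ci * \sum_(s < t.+1) u (k0 + (s.+1)%:Z) * wc (t - s).
Proof.
rewrite /wc /= nth_rcons size_ws ltnn eqxx; congr (_ * _); apply: eq_bigr => s _.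
by rewrite (@ws_prefix (t - s) t) //; lia.
Qed.

Definition vinv : int -> F := fun k => if k < - k0 then 0 else wc (absz (k + k0)).

Lemma vinv_lb : forall k, k < - k0 -> vinv k = 0.
Proof. by move=> k hk; rewrite /vinv hk. Qed.

Lemma vinv_inv : c1 u vinv = d1.
Proof.
apply: functional_extensionality => m.
case: (ltrP m 0) => hm.
  rewrite /d1 (_ : (m == 0) = false); last by lia.
  apply: fsum_eq0 => l; case: (ltrP l k0) => hl; first by rewrite Hu ?mul0r.
  by rewrite vinv_lb ?mulr0 //; lia.
have [t ->] : exists t : nat, m = t%:Z by exists (absz m); lia.
rewrite /c1 (@fsumE _ _ [seq k0 + s%:Z | s <- iota 0 t.+1]); first last.
- move=> l /nz_mul [h1 h2]; apply/mapP; exists (absz (l - k0)).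
    have h3 := lb_nz Hu h1; move: h2; rewrite /vinv.
    case: (ltrP (t%:Z - l) (- k0)) => [_|h2 _]; first by rewrite eqxx.
    rewrite mem_iota; lia.
  have := lb_nz Hu h1; lia.
- by rewrite map_inj_uniq ?iota_uniq // => x y /= h; lia.
rewrite big_map.
have -> : \sum_(i <- iota 0 t.+1) u (k0 + i%:Z) * vinv (t%:Z - (k0 + i%:Z)) =
    \sum_(s < t.+1) u (k0 + s%:Z) * vinv (t%:Z - (k0 + s%:Z)).
  by rewrite -[iota 0 t.+1]/(index_iota 0 t.+1) big_mkord.
have E : forall s : 'I_t.+1, vinv (t%:Z - (k0 + (s : nat)%:Z)) = wc (t - s).
  move=> s; rewrite /vinv ifF; last by have := ltn_ord s; lia.
  congr wc; have := ltn_ord s; lia.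
under eq_bigr do rewrite E.
rewrite /d1; case: t E => [|t] E.
  by rewrite big_ord1 /= addr0 wc0 mulfV.
rewrite big_ord_recl /= addr0 subn0 wcS mulrA mulrN mulfV // mulNr mul1r.
rewrite addrC; apply/eqP; rewrite subr_eq0; apply/eqP; apply: eq_bigr => s _.
by rewrite /bump /= add1n subSS.
Qed.

End Inv.

Lemma c1_inv u : lbounded u -> (exists k, u k != 0) ->
  exists v, lbounded v /\ c1 u v = d1.
Proof.
move=> [N HN] [k Hk].
have ex : exists t : nat, u (N + t%:Z) != 0.
  exists (absz (k - N)); have := lb_nz HN Hk; move=> h.
  by rewrite (_ : N + _ = k) //; lia.
pose t0 := ex_minn ex.
have [Ht0 Hmin] : u (N + t0%:Z) != 0 /\ forall t, u (N + t%:Z) != 0 -> (t0 <= t)%N.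
  by rewrite /t0; case: ex_minnP.
have Hu : forall k, k < N + t0%:Z -> u k = 0.
  move=> k' hk'; case: (ltrP k' N) => h; first exact: HN.
  apply/eqP; apply: contraTT hk' => nz.
  have := Hmin (absz (k' - N)); rewrite (_ : N + _ = k'); last by lia.
  by move=> /(_ nz); rewrite -leNgt; lia.
exists (vinv u (N + t0%:Z)); split; last exact: vinv_inv.
by exists (- (N + t0%:Z)) => n; apply: vinv_lb.
Qed.

End OneD.


Record Lau (F : fieldType) := Laur { lc : int -> F; lcP : lbounded lc }.

HB.instance Definition _ (F : fieldType) := gen_eqMixin (Lau F).
HB.instance Definition _ (F : fieldType) := gen_choiceMixin (Lau F).

Section LauTheory.
Variable F : fieldType.

Lemma lau_eq (x y : Lau F) : lc x = lc y -> x = y.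
Proof.
case: x => u pu; case: y => v pv /= E; subst v.
by rewrite (proof_irrelevance _ pu pv).
Qed.

Lemma lb0 : lbounded (fun _ : int => (0 : F)). Proof. by exists 0. Qed.
Lemma lbD (u v : int -> F) : lbounded u -> lbounded v -> lbounded (fun k => u k + v k).
Proof.
move=> [N1 H1] [N2 H2]; exists (- (absz N1 + absz N2)%:Z) => n hn.
by rewrite H1 ?H2 ?addr0 //; lia.
Qed.
Lemma lbN (u : int -> F) : lbounded u -> lbounded (fun k => - u k).
Proof. by move=> [N H]; exists N => n /H ->; rewrite oppr0. Qed.
Lemma lbd1 : lbounded (@d1 F).
Proof. by exists 0 => n hn; rewrite /d1 (_ : n == 0 = false) //; lia. Qed.
Lemma lbc1 (u v : int -> F) : lbounded u -> lbounded v -> lbounded (c1 u v).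
Proof. by move=> [N1 H1] [N2 H2]; exists (N1 + N2); apply: c1_lb H1 H2. Qed.

Definition lzero : Lau F := Laur lb0.
Definition ladd (x y : Lau F) : Lau F := Laur (lbD (lcP x) (lcP y)).
Definition lopp (x : Lau F) : Lau F := Laur (lbN (lcP x)).
Definition lmul (x y : Lau F) : Lau F := Laur (lbc1 (lcP x) (lcP y)).
Definition lone : Lau F := Laur lbd1.

Lemma laddA : associative ladd.
Proof. by move=> x y z; apply: lau_eq; apply: functional_extensionality => k /=; rewrite addrA. Qed.
Lemma laddC : commutative ladd.
Proof. by move=> x y; apply: lau_eq; apply: functional_extensionality => k /=; rewrite addrC. Qed.
Lemma ladd0 : left_id lzero ladd.
Proof. by move=> x; apply: lau_eq; apply: functional_extensionality => k /=; rewrite add0r. Qed.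
Lemma laddN : left_inverse lzero lopp ladd.
Proof. by move=> x; apply: lau_eq; apply: functional_extensionality => k /=; rewrite addNr. Qed.

HB.instance Definition _ := GRing.isZmodule.Build (Lau F) laddA laddC ladd0 laddN.

Lemma lmulA : associative lmul.
Proof. by move=> x y z; apply: lau_eq; rewrite /= c1A //; apply: lcP. Qed.
Lemma lmulC : commutative lmul.
Proof. by move=> x y; apply: lau_eq; rewrite /= c1C. Qed.
Lemma lmul1 : left_id lone lmul.
Proof. by move=> x; apply: lau_eq; rewrite /= c1d. Qed.
Lemma lmulDl : left_distributive lmul (@GRing.add (Lau F)).
Proof. by move=> x y z; apply: lau_eq; rewrite /= c1Dl //; apply: lcP. Qed.
Lemma lone_neq0 : lone != 0.
Proof.
apply/eqP => /(congr1 (fun x => lc x 0)) /=; rewrite /d1 eqxx /=.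
by move/eqP; rewrite oner_eq0.
Qed.

HB.instance Definition _ := GRing.Zmodule_isComNzRing.Build (Lau F) lmulA lmulC lmul1 lmulDl lone_neq0.

Lemma lcD (x y : Lau F) : lc (x + y) = fun k => lc x k + lc y k. Proof. by []. Qed.
Lemma lcN (x : Lau F) : lc (- x) = fun k => - lc x k. Proof. by []. Qed.
Lemma lc0 : lc (0 : Lau F) = fun _ => 0. Proof. by []. Qed.
Lemma lcM (x y : Lau F) : lc (x * y) = c1 (lc x) (lc y). Proof. by []. Qed.
Lemma lc1 : lc (1 : Lau F) = @d1 F. Proof. by []. Qed.

Definition linv (x : Lau F) : Lau F :=
  match excluded_middle_informative (exists v, lbounded v /\ c1 (lc x) v = @d1 F) with
  | left H => let s := constructive_indefinite_description _ H in Laur (proj1 (proj2_sig s))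
  | right _ => 0
  end.

Lemma lmulVf (x : Lau F) : x != 0 -> linv x * x = 1.
Proof.
move=> nz; rewrite /linv; case: excluded_middle_informative => [H|[]].
  case: (constructive_indefinite_description _ H) => v [lv Hv] /=.
  by apply: lau_eq; rewrite lcM /= c1C Hv.
apply: c1_inv; first exact: lcP.
apply: contrapT => Hall; move/eqP: nz; apply; apply: lau_eq; rewrite lc0.
apply: functional_extensionality => k; apply/eqP; apply: contrapT => Hk.
by apply: Hall; exists k; apply/negP.
Qed.

Lemma linv0 : linv 0 = 0.
Proof.
rewrite /linv; case: excluded_middle_informative => // H.
exfalso; case: H => v [_ Hv].
have : c1 (lc (0 : Lau F)) v 0 = d1 F 0 by rewrite Hv.
rewrite /d1 eqxx /= /c1 fsum_eq0 => [|l]; last by rewrite mul0r.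
by move/eqP; rewrite eq_sym oner_eq0.
Qed.

HB.instance Definition _ := GRing.ComNzRing_isField.Build (Lau F) lmulVf linv0.

End LauTheory.


Section Bridge.
Variable K : fieldType.
Notation LLs := (Lau (Lau K)).

Definition fam (X : LLs) : int -> int -> K := fun j k => lc (lc X j) k.

Lemma lc_fsum (F : fieldType) (f : int -> Lau F) k : fin_supp f ->
  lc (fsum f) k = fsum (fun i => lc (f i) k).
Proof.
move=> fs; rewrite -(fsum_morph (h := fun x : Lau F => lc x k)) //.
Qed.

Lemma fam_LL X : LL (fam X).
Proof.
split; last by move=> j; exact: lcP.
have [N HN] := lcP X; exists N => j k hj; rewrite /fam HN //.
Qed.

Lemma fam_inj X Y : fam X = fam Y -> X = Y.
Proof.
move=> E; apply: lau_eq; apply: functional_extensionality => j; apply: lau_eq.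
apply: functional_extensionality => k; exact: (congr1 (fun f => f j k) E).
Qed.

Lemma famD X Y : fam (X + Y) = fun j k => fam X j k + fam Y j k.
Proof. by []. Qed.

Lemma fam0 : fam 0 = fun _ _ => 0. Proof. by []. Qed.

Lemma fam1 : fam 1 = oneKK K.
Proof.
apply: functional_extensionality => j; apply: functional_extensionality => k.
rewrite /fam /= /d1 /oneKK; case: (j == 0) => /=; first by [].
by [].
Qed.

Lemma famM X Y : fam (X * Y) = mulKK (fam X) (fam Y).
Proof.
apply: functional_extensionality => j; apply: functional_extensionality => k.
rewrite /fam lcM /c1 lc_fsum; last first.
  have [N1 H1] := lcP X; have [N2 H2] := lcP Y; exact: c1_supp H1 H2.
rewrite /mulKK; apply: fsum_ext => i; by rewrite lcM.
Qed.

Lemma famB X Y : fam (X - Y) = fun j k => fam X j k - fam Y j k.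
Proof. by []. Qed.

Lemma fam_sum (I : Type) (r : seq I) (X : I -> LLs) :
  fam (\sum_(i <- r) X i) = fun j k => \sum_(i <- r) fam (X i) j k.
Proof.
elim: r => [|x r IH].
  by rewrite big_nil fam0; do 2 (apply: functional_extensionality => ?); rewrite big_nil.
rewrite big_cons famD IH; do 2 (apply: functional_extensionality => ?); by rewrite big_cons.
Qed.

Definition rowL (A : int -> int -> K) (H : LL A) (j : int) : Lau K := Laur (proj2 H j).

Lemma rowL_lb (A : int -> int -> K) (H : LL A) : lbounded (rowL H).
Proof.
have [N HN] := proj1 H; exists N => j hj; apply: lau_eq; apply: functional_extensionality => k.
by rewrite /= HN.
Qed.

Definition emb (A : int -> int -> K) : LLs :=
  match excluded_middle_informative (LL A) with
  | left H => Laur (rowL_lb H)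
  | right _ => 0
  end.

Lemma fam_emb (A : int -> int -> K) : LL A -> fam (emb A) = A.
Proof.
move=> H; rewrite /emb; case: excluded_middle_informative => // H'.
Qed.

Lemma emb_fam X : emb (fam X) = X.
Proof. by apply: fam_inj; rewrite fam_emb //; apply: fam_LL. Qed.

Lemma mulKK_emb (A B : int -> int -> K) : LL A -> LL B -> mulKK A B = fam (emb A * emb B).
Proof. by move=> HA HB; rewrite famM !fam_emb. Qed.

Lemma emb_mul (A B : int -> int -> K) : LL A -> LL B -> emb (mulKK A B) = emb A * emb B.
Proof. by move=> HA HB; rewrite mulKK_emb // emb_fam. Qed.

Lemma emb1 : emb (oneKK K) = 1.
Proof. by rewrite -fam1 emb_fam. Qed.

Lemma LL_oneKK : LL (oneKK K).
Proof. by rewrite -fam1; apply: fam_LL. Qed.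

Lemma LL_mulKK (A B : int -> int -> K) : LL A -> LL B -> LL (mulKK A B).
Proof. by move=> HA HB; rewrite mulKK_emb //; apply: fam_LL. Qed.

Lemma emb_inj (A B : int -> int -> K) : LL A -> LL B -> emb A = emb B -> A = B.
Proof. by move=> HA HB E; rewrite -(fam_emb HA) -(fam_emb HB) E. Qed.

Lemma emb_eq0 (A : int -> int -> K) : LL A -> emb A = 0 -> A = fun _ _ => 0.
Proof. by move=> HA E; rewrite -(fam_emb HA) E. Qed.

Lemma invKK_spec (A : int -> int -> K) : LL A -> A <> (fun _ _ => 0) ->
  LL (invKK A) /\ emb (invKK A) = (emb A)^-1.
Proof.
move=> HA nz.
have ne : emb A != 0 by apply/eqP => /(emb_eq0 HA).
have ex : exists B, isKxz B /\ forall j k, mulKK A B j k = oneKK K j k.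
  exists (fam (emb A)^-1); split; first exact: fam_LL.
  by move=> j k; rewrite (mulKK_emb HA (fam_LL _)) emb_fam mulfV // fam1.
rewrite /invKK; case: excluded_middle_informative => // H.
case: (constructive_indefinite_description _ H) => B [HB EB] /=.
have LB : LL B by [].
split => //.
have : emb A * emb B = 1.
  rewrite -emb_mul // -emb1; congr emb.
  by do 2 (apply: functional_extensionality => ?); rewrite EB.
by move=> E; rewrite -[emb B]mul1r -(mulVf ne) -mulrA E mulr1.
Qed.

End Bridge.


Section Pow.
Variable K : fieldType.
Notation LLs := (Lau (Lau K)).

Lemma pow_rows (X : LLs) (e : int) (D J : nat) :
  (forall j k, j < 0 -> fam X j k = 0) ->
  (forall k, k < e -> fam X 0 k = 0) ->
  (forall i k, 0 < i <= J%:Z -> k < e - D%:Z -> fam X i k = 0) ->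
  forall n : nat, (forall j k, j < 0 -> fam (X ^+ n) j k = 0) /\
    (forall j k, 0 <= j <= J%:Z -> k < n%:Z * e - j * D%:Z -> fam (X ^+ n) j k = 0).
Proof.
move=> H1 H2 H3; elim=> [|n [IH1 IH2]].
  rewrite expr0 fam1; split => j k hj; rewrite /oneKK.
    by rewrite (_ : j == 0 = false) //; lia.
  move=> hk; rewrite (_ : k == 0 = false) ?andbF //; nia.
rewrite exprS famM; split => j k hj.
  apply: fsum_eq0 => i; apply: fsum_eq0 => l.
  case: (ltrP i 0) => hi; first by rewrite H1 ?mul0r.
  by rewrite IH1 ?mulr0 //; lia.
move=> hk; apply: fsum_eq0 => i; apply: fsum_eq0 => l.
case: (ltrP i 0) => hi; first by rewrite H1 ?mul0r.
case: (ltrP (j - i) 0) => hji; first by rewrite IH1 ?mulr0.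
case: (eqVneq i 0) => [->|hi0].
  case: (ltrP l e) => hl; first by rewrite H2 ?mul0r.
  rewrite IH2 ?mulr0 //; [lia|nia].
case: (ltrP l (e - D%:Z)) => hl; first by rewrite H3 ?mul0r //; lia.
rewrite IH2 ?mulr0 //; [lia|nia].
Qed.

Variable phi : int -> int -> K.
Hypothesis Hphi : associate phi.

Lemma phi_LL : LL phi.
Proof.
case: Hphi => h1 h2 _ _; split => //; by exists 0.
Qed.

Notation Phi := (emb phi).

Lemma famPhi : fam Phi = phi.
Proof. exact: fam_emb phi_LL. Qed.

Lemma Phi_neq0 : Phi != 0.
Proof.
apply/eqP => E; have := congr1 (fun X => fam X 0 1) E; rewrite famPhi fam0 /=.
by case: Hphi => _ _ h3 _; rewrite h3 /= => /eqP; rewrite oner_eq0.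
Qed.

Lemma powKK_fam (m : int) : powKK phi m = fam (Phi ^ m).
Proof.
case: m => n.
  rewrite /powKK /exprz; elim: n => [|n IH] /=; first by rewrite expr0 fam1.
  by rewrite IH -[phi in mulKK phi _]famPhi -famM -exprS.
rewrite /powKK /exprz -exprVn.
have nz : phi <> (fun _ _ => 0).
  move=> E; have := congr1 (fun f => f 0 1) E; case: Hphi => _ _ h3 _.
  by rewrite h3 /= => /eqP; rewrite oner_eq0.
have [LI EI] := invKK_spec phi_LL nz.
elim: n.+1 => [|t IH] /=; first by rewrite expr0 fam1.
by rewrite IH -(fam_emb LI) -famM EI -exprS.
Qed.

End Pow.

Section InvLow.
Variable F : fieldType.

Lemma c1_low (u v : int -> F) m : (forall i, i < 0 -> u i = 0) -> (forall i, i < m -> v i = 0) ->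
  c1 u v m = u 0 * v m.
Proof.
move=> Hu Hv; rewrite /c1 (@fsum_delta _ _ 0); first by rewrite subr0.
move=> l hl; case: (ltrP l 0) => h; first by rewrite Hu ?mul0r.
by rewrite Hv ?mulr0 //; lia.
Qed.

Lemma c1_inv_low (u v : int -> F) : lbounded v -> (forall i, i < 0 -> u i = 0) -> u 0 != 0 ->
  c1 u v = d1 F -> (forall i, i < 0 -> v i = 0) /\ v 0 = (u 0)^-1.
Proof.
move=> [N HN] Hu Hu0 E.
have neg : forall i, i < 0 -> v i = 0.
  suff S : forall t : nat, forall i, i < N + t%:Z -> i < 0 -> v i = 0.
    by move=> i hi; apply: (S (absz (i - N)).+1); lia.
  elim=> [|t IH] i hi hi0; first by apply: HN; lia.
  case: (ltrP i (N + t%:Z)) => h; first exact: IH.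
  have := congr1 (fun f => f i) E; rewrite /= (c1_low Hu (m := i)); last first.
    move=> i' hi'; apply: IH; lia.
  rewrite /d1 (_ : i == 0 = false); last by lia.
  by move/eqP; rewrite mulf_eq0 (negbTE Hu0) /= => /eqP.
split => //.
have := congr1 (fun f => f 0) E; rewrite /= (c1_low Hu (m := 0)) // /d1 eqxx /=.
by move=> H; rewrite -[v 0]mul1r -(mulVf Hu0) -mulrA H mulr1.
Qed.

End InvLow.

Section PowBound.
Variable K : fieldType.
Variable phi : int -> int -> K.
Hypothesis Hphi : associate phi.
Notation Phi := (emb phi).

Lemma Qrows : (forall j k, j < 0 -> fam (Phi^-1) j k = 0) /\
  (forall k, k < -1 -> fam (Phi^-1) 0 k = 0).
Proof.
have E : c1 (lc Phi) (lc (Phi^-1)) = d1 (Lau K).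
  by rewrite -lcM mulfV ?Phi_neq0.
have Hu : forall i, i < 0 -> lc Phi i = 0.
  move=> i hi; apply: lau_eq; apply: functional_extensionality => k.
  have := congr1 (fun f => f i k) (famPhi Hphi); rewrite /fam /= => ->.
  by case: Hphi => h1 _ _ _; rewrite h1.
have Hu0 : lc Phi 0 != 0.
  apply/eqP => /(congr1 (fun x => lc x 1)); rewrite /=.
  have := congr1 (fun f => f 0 1) (famPhi Hphi); rewrite /fam /= => ->.
  by case: Hphi => _ _ h3 _; rewrite h3 /= => /eqP; rewrite oner_eq0.
have [neg r0] := c1_inv_low (lcP _) Hu Hu0 E.
split.
  by move=> j k hj; rewrite /fam neg.
move=> k hk; rewrite /fam r0.
(* the inverse of x is x^-1 *)
set y := (lc Phi 0)^-1.
have Ey : c1 (lc (lc Phi 0)) (lc y) = d1 K by rewrite -lcM mulfV.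
have Hx : forall l, lc (lc Phi 0) l = (l == 1)%:R.
  move=> l; have := congr1 (fun f => f 0 l) (famPhi Hphi); rewrite /fam /= => ->.
  by case: Hphi => _ _ h3 _; rewrite h3.
have := congr1 (fun f => f (k + 1)) Ey; rewrite /= /c1 (@fsum_delta _ _ 1).
  rewrite Hx eqxx mul1r /d1 addrK (_ : k + 1 == 0 = false) //; lia.
by move=> l hl; rewrite Hx (negbTE hl) mul0r.
Qed.

Lemma pow_neg_rows (m : int) j k : j < 0 -> fam (Phi ^ m) j k = 0.
Proof.
move=> hj; have [Q1 Q2] := Qrows.
have P1 : forall j k, j < 0 -> fam Phi j k = 0.
  by move=> j' k' h; rewrite (famPhi Hphi); case: Hphi => h1 _ _ _; rewrite h1.
case: m => n.
  have [R _] := @pow_rows _ Phi 1 0 0 P1 (fun k h => ltac:(by rewrite (famPhi Hphi); case: Hphi => _ _ h3 _; rewrite h3 (_ : k == 1 = false) //; lia))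
    (fun i k h => ltac:(lia)) n.
  by rewrite /exprz R.
have [R _] := @pow_rows _ (Phi^-1) (-1) 0 0 Q1 Q2 (fun i k h => ltac:(lia)) n.+1.
by rewrite /exprz -exprVn R.
Qed.

Lemma pow_bound (J : nat) : exists C : nat, forall (m : int) j k,
  0 <= j <= J%:Z -> k < m - C%:Z -> fam (Phi ^ m) j k = 0.
Proof.
have [Q1 Q2] := Qrows.
have P1 : forall j k, j < 0 -> fam Phi j k = 0.
  by move=> j' k' h; rewrite (famPhi Hphi); case: Hphi => h1 _ _ _; rewrite h1.
have P2 : forall k, k < 1 -> fam Phi 0 k = 0.
  by move=> k h; rewrite (famPhi Hphi); case: Hphi => _ _ h3 _; rewrite h3 (_ : k == 1 = false) //; lia.
have [m1 Hm1] := unif_bound (proj2 (fam_LL Phi)) 1 J%:Z.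
have [m2 Hm2] := unif_bound (proj2 (fam_LL (Phi^-1))) 1 J%:Z.
pose D1 := absz (1 - m1)%R. pose D2 := absz (-1 - m2)%R.
have P3 : forall i k, 0 < i <= J%:Z -> k < 1 - D1%:Z -> fam Phi i k = 0.
  by move=> i k hi hk; apply: Hm1; rewrite /D1 in hk; lia.
have Q3 : forall i k, 0 < i <= J%:Z -> k < -1 - D2%:Z -> fam (Phi^-1) i k = 0.
  by move=> i k hi hk; apply: Hm2; rewrite /D2 in hk; lia.
exists (J * D1 + J * D2)%N => m j k hj hk.
case: m hk => n hk.
  have [_ R] := pow_rows P1 P2 P3 n.
  rewrite /exprz R //; nia.
have [_ R] := pow_rows Q1 Q2 Q3 n.+1.
rewrite /exprz -exprVn R //; nia.
Qed.

End PowBound.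


Lemma fsum_finE (V : zmodType) (G S : int -> V) M : (forall x, G x = S x) ->
  (forall x, (M < absz x)%N -> S x = 0) -> fsum G = \sum_(x <- zr M) S x.
Proof. by move=> E H; rewrite (fsum_ext E); apply: fsum_def. Qed.

Section Nest.
Variable V : zmodType.
Variable M : nat.
Notation o x := (M < absz x)%N.

Lemma fsum2_def (U : int -> int -> V) :
  (forall x1 x2, o x1 || o x2 -> U x1 x2 = 0) ->
  fsum (fun x1 => fsum (fun x2 => U x1 x2)) = \sum_(x1 <- zr M) \sum_(x2 <- zr M) U x1 x2.
Proof. exact: fsum_box. Qed.

Lemma fsum3_def (U : int -> int -> int -> V) :
  (forall x1 x2 x3, [|| o x1, o x2 | o x3] -> U x1 x2 x3 = 0) ->
  fsum (fun x1 => fsum (fun x2 => fsum (fun x3 => U x1 x2 x3))) =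
  \sum_(x1 <- zr M) \sum_(x2 <- zr M) \sum_(x3 <- zr M) U x1 x2 x3.
Proof.
move=> H; apply: fsum_finE => [x1|x1 h].
  by apply: fsum2_def => x2 x3 h; apply: H; rewrite h orbT.
by apply: big1 => x2 _; apply: big1 => x3 _; apply: H; rewrite h.
Qed.

Lemma fsum4_def' (U : int -> int -> int -> int -> V) :
  (forall x1 x2 x3 x4, [|| o x1, o x2, o x3 | o x4] -> U x1 x2 x3 x4 = 0) ->
  fsum (fun x1 => fsum (fun x2 => fsum (fun x3 => fsum (fun x4 => U x1 x2 x3 x4)))) =
  \sum_(x1 <- zr M) \sum_(x2 <- zr M) \sum_(x3 <- zr M) \sum_(x4 <- zr M) U x1 x2 x3 x4.
Proof.
move=> H; apply: fsum_finE => [x1|x1 h].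
  by apply: fsum3_def => x2 x3 x4 h; apply: H; rewrite h orbT.
by apply: big1 => x2 _; apply: big1 => x3 _; apply: big1 => x4 _; apply: H; rewrite h.
Qed.

Lemma fsum5_def (U : int -> int -> int -> int -> int -> V) :
  (forall x1 x2 x3 x4 x5, [|| o x1, o x2, o x3, o x4 | o x5] -> U x1 x2 x3 x4 x5 = 0) ->
  fsum (fun x1 => fsum (fun x2 => fsum (fun x3 => fsum (fun x4 => fsum (fun x5 =>
    U x1 x2 x3 x4 x5))))) =
  \sum_(x1 <- zr M) \sum_(x2 <- zr M) \sum_(x3 <- zr M) \sum_(x4 <- zr M) \sum_(x5 <- zr M)
    U x1 x2 x3 x4 x5.
Proof.
move=> H; apply: fsum_finE => [x1|x1 h].
  by apply: fsum4_def' => x2 x3 x4 x5 h; apply: H; rewrite h orbT.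
by apply: big1 => x2 _; apply: big1 => x3 _; apply: big1 => x4 _; apply: big1 => x5 _;
  apply: H; rewrite h.
Qed.

Lemma fsum6_def (U : int -> int -> int -> int -> int -> int -> V) :
  (forall x1 x2 x3 x4 x5 x6, [|| o x1, o x2, o x3, o x4, o x5 | o x6] -> U x1 x2 x3 x4 x5 x6 = 0) ->
  fsum (fun x1 => fsum (fun x2 => fsum (fun x3 => fsum (fun x4 => fsum (fun x5 =>
    fsum (fun x6 => U x1 x2 x3 x4 x5 x6)))))) =
  \sum_(x1 <- zr M) \sum_(x2 <- zr M) \sum_(x3 <- zr M) \sum_(x4 <- zr M) \sum_(x5 <- zr M)
    \sum_(x6 <- zr M) U x1 x2 x3 x4 x5 x6.
Proof.
move=> H; apply: fsum_finE => [x1|x1 h].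
  by apply: fsum5_def => x2 x3 x4 x5 x6 h; apply: H; rewrite h orbT.
by apply: big1 => x2 _; apply: big1 => x3 _; apply: big1 => x4 _; apply: big1 => x5 _;
  apply: big1 => x6 _; apply: H; rewrite h.
Qed.

Lemma sink4 (s : seq int) (G : int -> int -> int -> int -> int -> V) :
  \sum_(x <- s) \sum_(y1 <- s) \sum_(y2 <- s) \sum_(y3 <- s) \sum_(y4 <- s) G x y1 y2 y3 y4 =
  \sum_(y1 <- s) \sum_(y2 <- s) \sum_(y3 <- s) \sum_(y4 <- s) \sum_(x <- s) G x y1 y2 y3 y4.
Proof.
rewrite exchange_big; apply: eq_bigr => y1 _.
rewrite exchange_big; apply: eq_bigr => y2 _.
rewrite exchange_big; apply: eq_bigr => y3 _.
by rewrite exchange_big.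
Qed.

End Nest.


Lemma lb2_nz (V : zmodType) (F : int -> int -> V) N m n :
  (forall m n, (m < N) || (n < N) -> F m n = 0) -> F m n != 0 -> N <= m /\ N <= n.
Proof.
move=> H nz; split; apply: contraR nz; rewrite -ltNge => h; rewrite H ?h ?orbT ?eqxx //.
Qed.

Definition m12 (K : fieldType) (V : lmodType K) (f : int -> int -> K) (F : int -> int -> V) :=
  fun m n => fsum (fun l => fsum (fun k => f k l *: F (m - k) (n - l))).

Section Subst.
Variables (K : fieldType) (phi : int -> int -> K).
Hypothesis Hphi : associate phi.
Notation Phi := (emb phi).

Definition sb (V : lmodType K) (F : int -> int -> V) : int -> int -> V :=
  fun j k => fsum (fun m => fsum (fun n => fam (Phi ^ m) j (k - n) *: F m n)).

Lemma P_nz0 m j k : fam (Phi ^ m) j k != 0 -> 0 <= j.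
Proof. by apply: contraR; rewrite -ltNge => h; rewrite pow_neg_rows ?eqxx. Qed.

Lemma P_nzC (j0 : int) (C : nat) (HC : forall (m : int) j k, 0 <= j <= (absz j0)%:Z -> k < m - C%:Z ->
    fam (Phi ^ m) j k = 0) m j k :
  j <= j0 -> fam (Phi ^ m) j k != 0 -> m - C%:Z <= k.
Proof.
move=> hj nz; have h0 := P_nz0 nz; apply: contraR nz; rewrite -ltNge => h.
by rewrite HC ?eqxx //; lia.
Qed.

Variable V : lmodType K.

Lemma sb_neg (F : int -> int -> V) j k : j < 0 -> sb F j k = 0.
Proof.
move=> hj; apply: fsum_eq0 => m; apply: fsum_eq0 => n.
by rewrite pow_neg_rows ?scale0r.
Qed.

Lemma sb_box (F : int -> int -> V) j k : lbounded2 F ->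
  exists M, box2 (fun m n => fam (Phi ^ m) j (k - n) *: F m n) M.
Proof.
move=> [N HN]; case: (ltrP j 0) => hj.
  by exists 0%N => m n _; rewrite pow_neg_rows ?scale0r.
have [C HC] := pow_bound Hphi (absz j).
exists (absz N + absz (k - N + C%:Z)%R + absz N + absz (k - N + C%:Z)%R)%N.
apply: box_int => m n /nz_scale [h1 h2].
have [q1 q2] := lb2_nz HN h2; have q3 := P_nzC HC (lexx j) h1.
apply/andP; split; apply/andP; split; lia.
Qed.

Lemma sb_LL (F : int -> int -> V) : lbounded2 F -> LL (sb F).
Proof.
move=> [N HN]; split; first by exists 0 => j k hj; apply: sb_neg.
move=> j; case: (ltrP j 0) => hj; first by exists 0 => k _; apply: sb_neg.
have [C HC] := pow_bound Hphi (absz j).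
exists (N + N - C%:Z) => k hk; apply: fsum_eq0 => m; apply: fsum_eq0 => n.
apply/eqP; apply: contraTT hk => /nz_scale [h1 h2].
have [q1 q2] := lb2_nz HN h2; have q3 := P_nzC HC (lexx j) h1.
rewrite -leNgt; lia.
Qed.

Lemma sbD (F G : int -> int -> V) j k : lbounded2 F -> lbounded2 G ->
  sb (fun m n => F m n + G m n) j k = sb F j k + sb G j k.
Proof.
move=> LF LG; have [M1 H1] := sb_box j k LF; have [M2 H2] := sb_box j k LG.
rewrite /sb -fsumD; [|exact: box2_out H1|exact: box2_out H2].
apply: fsum_ext => m; rewrite -fsumD; [|exact: box2_in H1|exact: box2_in H2].
by apply: fsum_ext => n; rewrite scalerDr.
Qed.

Lemma lb2D (F G : int -> int -> V) : lbounded2 F -> lbounded2 G ->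
  lbounded2 (fun m n => F m n + G m n).
Proof.
move=> [N1 H1] [N2 H2]; exists (- (absz N1 + absz N2)%:Z) => m n h.
rewrite H1 ?H2 ?addr0 //; move: h; case/orP=> h; apply/orP; by [left; lia|right; lia].
Qed.

Lemma lb2_sum (I : Type) (r : seq I) (F : I -> int -> int -> V) :
  (forall i, lbounded2 (F i)) -> lbounded2 (fun m n => \sum_(i <- r) F i m n).
Proof.
move=> H; elim: r => [|x r IH].
  by exists 0 => m n _; rewrite big_nil.
suff -> : (fun m n => \sum_(i <- x :: r) F i m n) = (fun m n => F x m n + \sum_(i <- r) F i m n).
  exact: lb2D.
by do 2 (apply: functional_extensionality => ?); rewrite big_cons.
Qed.

Lemma sb_sum (I : Type) (r : seq I) (F : I -> int -> int -> V) j k :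
  (forall i, lbounded2 (F i)) ->
  sb (fun m n => \sum_(i <- r) F i m n) j k = \sum_(i <- r) sb (F i) j k.
Proof.
move=> H; elim: r => [|x r IH].
  rewrite big_nil; apply: fsum_eq0 => m; apply: fsum_eq0 => n; by rewrite big_nil scaler0.
rewrite big_cons -IH -sbD //; last exact: lb2_sum.
by apply: fsum_ext => m; apply: fsum_ext => n; rewrite big_cons.
Qed.

End Subst.


Section Mult.
Variables (K : fieldType) (phi : int -> int -> K).
Hypothesis Hphi : associate phi.
Notation Phi := (emb phi).
Notation P m := (fam (Phi ^ m)).
Variable V : lmodType K.

Lemma sb_mul (f : int -> int -> K) (F : int -> int -> V) : lbounded2 f -> lbounded2 F ->
  forall j k, sb phi (m12 f F) j k = cv (@sb _ phi K^o f) (sb phi F) j k.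
Proof.
move=> Lf LF j k; have [Nf Hf] := Lf; have [NF HF] := LF.
case: (ltrP j 0) => hj.
  rewrite sb_neg //; symmetry; apply: fsum_eq0 => i; apply: fsum_eq0 => l.
  case: (ltrP i 0) => hi; first by rewrite sb_neg // scale0r.
  by rewrite (@sb_neg _ _ Hphi V) ?scaler0 //; lia.
have [C HC] := pow_bound Hphi (absz j).
have hP := P_nzC Hphi HC.
have L1 : sb phi (m12 f F) j k = fsum (fun m => fsum (fun n => fsum (fun b => fsum (fun a =>
    P m j (k - n) *: (f a b *: F (m - a) (n - b)))))).
  rewrite /sb; apply: fsum_ext => m; apply: fsum_ext => n; rewrite /m12.
  have HB : box2 (fun b a => f a b *: F (m - a) (n - b))
      (absz Nf + absz (n - NF)%R + absz Nf + absz (m - NF)%R).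
    apply: box_int => b a /nz_scale [h1 h2].
    have [q1 q2] := lb2_nz Hf h1; have [q3 q4] := lb2_nz HF h2.
    apply/andP; split; apply/andP; split; lia.
  rewrite (fsum2_morph (h := fun v => P m j (k - n) *: v) _ _ HB) ?scaler0 //.
  by move=> x y; rewrite scalerDr.
have L2 : sb phi (m12 f F) j k = fsum (fun b => fsum (fun a => fsum (fun c => fsum (fun d =>
    P (c + a) j (k - (d + b)) *: (f a b *: F c d))))).
  rewrite L1 (fsum4_exchange_int (a1 := Nf + NF) (b1 := k + C%:Z - Nf - NF)
    (a2 := Nf + NF) (b2 := k + C%:Z - Nf - NF) (a3 := Nf) (b3 := k + C%:Z - Nf - NF - NF)
    (a4 := Nf) (b4 := k + C%:Z - Nf - NF - NF)); last first.
    move=> m n b a /nz_scale [h1 /nz_scale [h2 h3]].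
    have [q1 q2] := lb2_nz Hf h2; have [q3 q4] := lb2_nz HF h3; have q5 := hP _ _ _ (lexx j) h1.
    split; apply/andP; split; lia.
  apply: fsum_ext => b; apply: fsum_ext => a.
  rewrite -(fsum_shift _ a); apply: fsum_ext => c.
  rewrite -(fsum_shift _ b); apply: fsum_ext => d.
  by rewrite /= !addrK.
have L3 : sb phi (m12 f F) j k = fsum (fun b => fsum (fun a => fsum (fun c => fsum (fun d =>
    fsum (fun i => fsum (fun l =>
    (P a i (l - b) * P c (j - i) (k - l - d)) *: (f a b *: F c d))))))).
  rewrite L2; apply: fsum_ext => b; apply: fsum_ext => a; apply: fsum_ext => c.
  apply: fsum_ext => d.
  have uP : Phi \is a GRing.unit by rewrite unitfE Phi_neq0.
  rewrite addrC exprzDr // famM /mulKK.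
  have HB : box2 (fun i l => (P a i l * P c (j - i) (k - (d + b) - l) : K^o))
      (absz 0 + absz j + absz (a - C%:Z)%R + absz (k - (d + b) - c + C%:Z)%R).
    apply: box_int => i l /nz_mul [h1 h2].
    have q1 := P_nz0 Hphi h1; have q2 := P_nz0 Hphi h2.
    have q3 := hP a i l ltac:(lia) h1; have q4 := hP c (j - i) _ ltac:(lia) h2.
    apply/andP; split; apply/andP; split; lia.
  rewrite (fsum2_morph (h := fun s : K^o => (s : K) *: (f a b *: F c d)) _ _ HB) ?scale0r //;
    last by move=> x y; rewrite scalerDl.
  apply: fsum_ext => i; rewrite -[RHS](fsum_shift _ b); apply: fsum_ext => l.
  rewrite /= addrK; congr ((_ * P c _ _) *: _); lia.
have R1 : cv (@sb _ phi K^o f) (sb phi F) j k = fsum (fun i => fsum (fun l => fsum (fun a =>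
    fsum (fun b => fsum (fun c => fsum (fun d =>
    (P a i (l - b) * f a b) *: (P c (j - i) (k - l - d) *: F c d))))))).
  rewrite /cv; apply: fsum_ext => i; apply: fsum_ext => l.
  have [M1 H1] := @sb_box _ _ Hphi K^o f i l Lf.
  rewrite /sb (fsum2_morph (h := fun s : K^o => (s : K) *: sb phi F (j - i) (k - l)) _ _ H1)
    ?scale0r //; last by move=> x y; rewrite scalerDl.
  apply: fsum_ext => a; apply: fsum_ext => b.
  have [M2 H2] := @sb_box _ _ Hphi V F (j - i) (k - l) LF.
  rewrite -(fsum2_morph (h := fun v => (P a i (l - b) * f a b) *: v) _ _ H2)
    ?scaler0 //; last by move=> x y; rewrite scalerDr.
rewrite L3 R1.
pose U := fun i l a b c d => (P a i (l - b) * f a b) *: (P c (j - i) (k - l - d) *: F c d).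
pose M := (absz k + absz j + 2 * C + 4 * absz Nf + 4 * absz NF)%N.
have HU : forall i l a b c d, U i l a b c d != 0 ->
    [&& absz i <= M, absz l <= M, absz a <= M, absz b <= M, absz c <= M & absz d <= M]%N.
  move=> i l a b c d /nz_scale [/nz_mul [h1 h2] /nz_scale [h3 h4]].
  have [q1 q2] := lb2_nz Hf h2; have [q3 q4] := lb2_nz HF h4.
  have q5 := P_nz0 Hphi h1; have q6 := P_nz0 Hphi h3.
  have q7 := hP a i _ ltac:(lia) h1; have q8 := hP c (j - i) _ ltac:(lia) h3.
  rewrite /M; repeat (apply/andP; split); lia.
have E : forall b a c d i l, (P a i (l - b) * P c (j - i) (k - l - d)) *: (f a b *: F c d) =
    U i l a b c d.
  move=> b a c d i l; rewrite /U !scalerA; congr (_ *: _).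
  by rewrite -!mulrA; congr (_ * _); rewrite mulrC.
transitivity (fsum (fun b => fsum (fun a => fsum (fun c => fsum (fun d =>
    fsum (fun i => fsum (fun l => U i l a b c d))))))).
  do 6 (apply: fsum_ext => ?); exact: E.
have nzU : forall i l a b c d, U i l a b c d != 0 -> ~~ [|| (M < absz i)%N, (M < absz l)%N,
    (M < absz a)%N, (M < absz b)%N, (M < absz c)%N | (M < absz d)%N].
  move=> i l a b c d /HU H6.
  by rewrite !negb_or -!leqNgt.
rewrite (@fsum6_def _ M (fun b a c d i l => U i l a b c d)); last first.
  move=> b a c d i l h; apply/eqP; apply: contraTT h => /nzU.
  by apply: contra => h; move: h; rewrite !orbA => /orP; lia.
rewrite (@fsum6_def _ M U); last first.
  move=> i l a b c d h; apply/eqP; apply: contraTT h => /nzU.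
  by apply: contra => h; move: h; rewrite !orbA => /orP; lia.
rewrite [RHS](eq_bigr _ (fun i _ => sink4 _ (fun l a b c d => U i l a b c d))).
rewrite [RHS](sink4 _ (fun i a b c d => \sum_(l <- zr M) U i l a b c d)).
by rewrite [RHS]exchange_big.
Qed.

End Mult.


Definition tr (V : Type) (F : int -> int -> V) : int -> int -> V := fun a b => F b a.

Lemma lb2_tr (V : zmodType) (F : int -> int -> V) : lbounded2 F -> lbounded2 (tr F).
Proof. by move=> [N H]; exists N => m n h; rewrite /tr H // orbC. Qed.

Lemma lb2_LL (V : zmodType) (F : int -> int -> V) : lbounded2 F -> LL F.
Proof.
move=> [N H]; split; first by exists N => j k h; rewrite H ?h.
by move=> j; exists N => k h; rewrite H ?h ?orbT.
Qed.

Lemma lb2_cv (K : fieldType) (V : lmodType K) (A : int -> int -> K) (F : int -> int -> V) :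
  lbounded2 A -> lbounded2 F -> lbounded2 (cv A F).
Proof.
move=> [NA HA] [NF HF]; exists (NA + NF) => j k h; apply: fsum_eq0 => i; apply: fsum_eq0 => l.
apply/eqP; apply: contraTT h => /nz_scale [h1 h2].
have [q1 q2] := lb2_nz HA h1; have [q3 q4] := lb2_nz HF h2.
rewrite negb_or -!leNgt; apply/andP; split; lia.
Qed.

Lemma subst_W_sb (K : fieldType) (W : lmodType K) (phi : int -> int -> K) (Hphi : associate phi)
  (F : int -> int -> W -> W) j k w : subst_W phi F j k w = sb phi (fun m n => F m n w) j k.
Proof.
by rewrite /subst_W /sb; apply: fsum_ext => m; apply: fsum_ext => n; rewrite powKK_fam.
Qed.

Lemma subst_s_sb (K : fieldType) (phi : int -> int -> K) (Hphi : associate phi)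
  (g : int -> int -> K) : subst_s phi g = @sb _ phi K^o g.
Proof.
apply: functional_extensionality => j; apply: functional_extensionality => k.
rewrite /subst_s /sb; apply: fsum_ext => m; apply: fsum_ext => n.
by rewrite powKK_fam // mulrC.
Qed.

Lemma Y_E_spec (K : fieldType) (W : lmodType K) (phi : int -> int -> K) (a b : int -> W -> W) :
  phi_quasi_compatible phi a b -> exists p, qc_witness phi a b p /\ Y_E phi a b = Yp phi a b p.
Proof.
move=> H; rewrite /Y_E; case: excluded_middle_informative => // H'.
case: (constructive_indefinite_description _ H') => p Hp /=.
by exists p.
Qed.

Lemma in_EW0 (K : fieldType) (W : lmodType K) (a : int -> W -> W) n : in_EW a -> a n 0 = 0.
Proof.
move=> [Hl _]; have := Hl n 1 0 0; rewrite scaler0 addr0 scale1r => H.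
by apply: (@addrI _ (a n 0)); rewrite addr0 -H.
Qed.

Section Sig.
Variables (K : fieldType) (phi : int -> int -> K).
Hypothesis Hphi : associate phi.
Notation LLs := (Lau (Lau K)).

Definition sigm (X : LLs) : LLs := @emb K (@sb _ phi K^o (tr (fam X))).

Lemma fam_sig X : lbounded2 (fam X) -> fam (sigm X) = @sb _ phi K^o (tr (fam X)).
Proof. by move=> h; rewrite /sigm fam_emb //; exact: (@sb_LL _ _ Hphi K^o _ (lb2_tr h)). Qed.

Lemma lb2_famM (X Y : LLs) : lbounded2 (fam X) -> lbounded2 (fam Y) -> lbounded2 (fam (X * Y)).
Proof. by move=> hX hY; rewrite famM mulKK_cv; exact: (@lb2_cv _ K^o _ _ hX hY). Qed.

Lemma lb2_fam1 : lbounded2 (fam (1 : LLs)).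
Proof.
rewrite fam1; exists 0 => m n h; rewrite /oneKK.
case/orP: h => h.
  by rewrite (_ : (m == 0) = false) //; lia.
by rewrite (_ : (n == 0) = false) ?andbF //; lia.
Qed.

Lemma sigM (X Y : LLs) : lbounded2 (fam X) -> lbounded2 (fam Y) -> sigm (X * Y) = sigm X * sigm Y.
Proof.
move=> hX hY; rewrite /sigm -emb_mul; first last.
- exact: (@sb_LL _ _ Hphi K^o _ (lb2_tr hY)).
- exact: (@sb_LL _ _ Hphi K^o _ (lb2_tr hX)).
congr emb; apply: functional_extensionality => j; apply: functional_extensionality => k.
rewrite famM mulKK_cv.
have -> : tr (@cv _ K^o (fam X) (fam Y)) = m12 (tr (fam X)) (tr (fam Y) : int -> int -> K^o).
  by [].
by rewrite (sb_mul Hphi) //; apply: lb2_tr.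
Qed.

Lemma sig1 : sigm 1 = 1.
Proof.
rewrite /sigm -[RHS]emb1; congr emb.
apply: functional_extensionality => j; apply: functional_extensionality => k.
rewrite fam1 /sb (@fsum_delta _ _ 0).
  rewrite (@fsum_delta _ _ 0); first by rewrite /tr /oneKK /= subr0 expr0z fam1 /oneKK; exact: mulr1.
  by move=> n hn; rewrite /tr /oneKK (negbTE hn) ?andbF /=; exact: mulr0.
move=> m hm; apply: fsum_eq0 => n; rewrite /tr /oneKK (negbTE hm) ?andbF /=; exact: mulr0.
Qed.

Lemma sig_prod (I : Type) (r : seq I) (Pr : pred I) (X : I -> LLs) :
  (forall i, lbounded2 (fam (X i))) ->
  lbounded2 (fam (\prod_(i <- r | Pr i) X i)) /\
  sigm (\prod_(i <- r | Pr i) X i) = \prod_(i <- r | Pr i) sigm (X i).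
Proof.
move=> H; elim: r => [|x r [IH1 IH2]].
  by rewrite !big_nil; split; [exact: lb2_fam1|exact: sig1].
rewrite !big_cons; case: (Pr x) => //.
by split; [exact: lb2_famM|rewrite sigM // IH2].
Qed.

End Sig.


Unset Implicit Arguments.

Theorem lemma4p6 (K : fieldType) (W : lmodType K) (phi : int -> int -> K)
  (n : nat) (a b : 'I_n -> int -> W -> W) (g : 'I_n -> int -> int -> K) :
  associate phi ->
  (forall i, in_EW (a i) /\ in_EW (b i)) ->
  (forall i, phi_quasi_compatible phi (a i) (b i)) ->
  (forall i, lbounded2 (g i)) ->
  inHom2 (fun m l w => \sum_(i < n) mul12 (g i) (prodab (a i) (b i)) m l w) ->
  forall (j k : int) (w : W),
    \sum_(i < n) mulKW (subst_s phi (g i)) (Y_E phi (a i) (b i)) j k w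
    = subst_W phi (fun m l w' =>
        \sum_(i < n) mul12 (g i) (prodab (a i) (b i)) m l w') j k w.
Proof.
move=> Hphi HAB Hqc Hg HG j k w.
have Hp : forall i, exists p, qc_witness phi (a i) (b i) p /\ Y_E phi (a i) (b i) = Yp phi (a i) (b i) p.
  by move=> i; apply: Y_E_spec.
pose p i := proj1_sig (constructive_indefinite_description _ (Hp i)).
have Hp1 : forall i, qc_witness phi (a i) (b i) (p i) /\ Y_E phi (a i) (b i) = Yp phi (a i) (b i) (p i).
  by move=> i; rewrite /p; case: constructive_indefinite_description.
have Lp : forall i, lbounded2 (p i).
  move=> i; have [[Hps _ _] _] := Hp1 i; exists 0 => m l h; exact: Hps.
pose ABt i : int -> int -> W := fun l k => a i k (b i l w).
have LAB : forall i, LL (ABt i).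
  move=> i; have [Ha Hb] := HAB i; split.
    have [N HN] := Hb.2 w; exists N => l k' hl; rewrite /ABt HN //; exact: in_EW0.
  by move=> l; exact: Ha.2.
pose Ht i := cv (tr (p i)) (ABt i).
have LHt : forall i, lbounded2 (Ht i).
  move=> i; have [[_ [_ H] _] _] := Hp1 i.
  exact: (lb2_tr (H w)).
pose Gt := fun l k => \sum_(i < n) cv (tr (g i)) (ABt i) l k.
have LGt : lbounded2 Gt by exact: (lb2_tr (HG.2 w)).
rewrite (subst_W_sb Hphi).
have -> : (fun m n0 => \sum_(i < n) mul12 (g i) (prodab (a i) (b i)) m n0 w) = tr Gt by [].
under eq_bigr => i _ do rewrite mulKW_cv (Hp1 i).2 (subst_s_sb Hphi).
have EY : forall i, (fun x y => Yp phi (a i) (b i) (p i) x y w) =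
    cv (invKK (@sb _ phi K^o (p i))) (sb phi (tr (Ht i))).
  move=> i; apply: functional_extensionality => x; apply: functional_extensionality => y.
  rewrite /Yp mulKW_cv (subst_s_sb Hphi); congr (cv _ _ x y).
  apply: functional_extensionality => x'; apply: functional_extensionality => y'.
  exact: (subst_W_sb Hphi).
under eq_bigr => i _ do rewrite EY.
pose Pi i : Lau (Lau K) := emb (tr (p i)).
pose Gi i : Lau (Lau K) := emb (tr (g i)).
have fPi : forall i, fam (Pi i) = tr (p i).
  by move=> i; rewrite fam_emb //; apply: lb2_LL; apply: lb2_tr.
have fGi : forall i, fam (Gi i) = tr (g i).
  by move=> i; rewrite fam_emb //; apply: lb2_LL; apply: lb2_tr.
have lPi : forall i, lbounded2 (fam (Pi i)) by move=> i; rewrite fPi; apply: lb2_tr.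
have lGi : forall i, lbounded2 (fam (Gi i)) by move=> i; rewrite fGi; apply: lb2_tr.
pose PA := \prod_(i < n) Pi i.
pose Qi i := \prod_(i' < n | i' != i) Pi i'.
have [lPA sPA] := sig_prod Hphi (index_enum 'I_n) xpredT lPi.
have lQi : forall i, lbounded2 (fam (Qi i)) by move=> i; exact: (sig_prod Hphi _ _ lPi).1.
have sQi : forall i, sigm phi (Qi i) = \prod_(i' < n | i' != i) sigm phi (Pi i').
  by move=> i; exact: (sig_prod Hphi _ _ lPi).2.
have lGQ : forall i, lbounded2 (fam (Gi i * Qi i)) by move=> i; apply: lb2_famM.
have EA : cv (fam PA) Gt = fun x y => \sum_(i < n) cv (fam (Gi i * Qi i)) (Ht i) x y.
  apply: functional_extensionality => x; apply: functional_extensionality => y.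
  rewrite /Gt cv_sum; first last.
  - by move=> i; apply: cv_LL => //; rewrite -fGi; apply: fam_LL.
  - exact: fam_LL.
  apply: eq_bigr => i _.
  have E1 : PA * Gi i = (Gi i * Qi i) * Pi i.
    have comm3 : forall x1 y1 z1 : Lau (Lau K), x1 * y1 * z1 = z1 * y1 * x1.
      by move=> x1 y1 z1; rewrite mulrC [x1 * y1]mulrC mulrA.
    by rewrite /PA /Qi (bigD1 i) //=; apply: comm3.
  rewrite -fGi (cv_assoc (fam_LL _) (fam_LL _) (LAB i)) -famM E1 famM.
  by rewrite -(cv_assoc (fam_LL _) (fam_LL _) (LAB i)) fPi.
have EB : forall x y, cv (fam (sigm phi PA)) (sb phi (tr Gt)) x y =
    \sum_(i < n) cv (fam (sigm phi (Gi i * Qi i))) (sb phi (tr (Ht i))) x y.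
  move=> x y.
  have S1 := sb_mul Hphi (lb2_tr lPA) (lb2_tr LGt) x y.
  rewrite (fam_sig Hphi lPA).
  transitivity (sb phi (tr (cv (fam PA) Gt)) x y); first exact: (esym S1).
  rewrite EA.
  have S2 := @sb_sum _ _ Hphi W _ (index_enum 'I_n) (fun i => tr (cv (fam (Gi i * Qi i)) (Ht i))) x y
    (fun i => lb2_tr (lb2_cv (lGQ i) (LHt i))).
  transitivity (\sum_(i < n) sb phi (tr (cv (fam (Gi i * Qi i)) (Ht i))) x y); first exact: S2.
  apply: eq_bigr => i _.
  have S3 := sb_mul Hphi (lb2_tr (lGQ i)) (lb2_tr (LHt i)) x y.
  by rewrite (fam_sig Hphi (lGQ i)); exact: S3.
pose S i := sigm phi (Pi i).
have LS : forall i, LL (@sb _ phi K^o (p i)) by move=> i; exact: (@sb_LL _ _ Hphi K^o _ (Lp i)).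
have nzS : forall i, (@sb _ phi K^o (p i) : int -> int -> K) <> (fun _ _ => 0).
  by move=> i; have [[_ _ H] _] := Hp1 i; rewrite (subst_s_sb Hphi) in H.
have sS : forall i, S i = @emb K (@sb _ phi K^o (p i)).
  by move=> i; rewrite /S /sigm fPi.
have S_neq0 : forall i, S i != 0.
  move=> i; rewrite sS; apply/eqP => E; apply: (nzS i); exact (@emb_eq0 K _ (LS i) E).
have fSinv : forall i, fam (S i)^-1 = invKK (@sb _ phi K^o (p i)).
  move=> i; have [LI EI] := @invKK_spec K _ (LS i) (nzS i).
  by rewrite sS -EI fam_emb.
have sPA_neq0 : sigm phi PA != 0.
  by rewrite sPA; apply/prodf_neq0 => i _; exact: S_neq0.
have LSG : LL (sb phi (tr Gt)) by exact: (sb_LL Hphi (lb2_tr LGt)).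
have LSH : forall i, LL (sb phi (tr (Ht i))) by move=> i; exact: (sb_LL Hphi (lb2_tr (LHt i))).
have EB' : cv (fam (sigm phi PA)) (sb phi (tr Gt)) =
    fun x y => \sum_(i < n) cv (fam (sigm phi (Gi i * Qi i))) (sb phi (tr (Ht i))) x y.
  by apply: functional_extensionality => x; apply: functional_extensionality => y; apply: EB.
symmetry.
rewrite -[sb phi (tr Gt)](cv1 (K := K)) -fam1 -(mulVf sPA_neq0) famM.
rewrite -(cv_assoc (fam_LL _) (fam_LL _) LSG) EB' cv_sum; first last.
- by move=> i; apply: cv_LL => //; apply: fam_LL.
- exact: fam_LL.
apply: eq_bigr => i _.
rewrite (cv_assoc (fam_LL _) (fam_LL _) (LSH i)) -famM.
have Efield : (sigm phi PA)^-1 * sigm phi (Gi i * Qi i) = sigm phi (Gi i) * (S i)^-1.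
  rewrite sigM // sQi sPA (bigD1 i) //= -/(S i).
  set R := \prod_(j0 < n | j0 != i) _.
  have nzR : R != 0 by apply/prodf_neq0 => i' _; exact: S_neq0.
  rewrite invfM mulrC -!mulrA; congr (_ * _).
  by rewrite mulrC -mulrA mulVf // mulr1.
rewrite Efield famM -(cv_assoc (fam_LL _) (fam_LL _) (LSH i)).
by rewrite fSinv (fam_sig Hphi (lGi i)) fGi.
Qed.
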